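(* Let $(M,\mathcal{T})$ be a closed pseudo $3$-manifold with $v(e)\ge9$ for every $e\in E$. Let $\{l(t):t\in[0,\infty)\}\subset\mathbb{R}^E_{>0}$ be the solution of the extended Ricci flow with initial data $l^0\in(0,\operatorname{arccosh}2)^E$ satisfying $l^0_e\in(\operatorname{arccosh}(1+\mu_{v(e)}),\operatorname{arccosh}(b_{v(e)}))$ for all $e\in E$. If there exists $t_0>0$ with $\sup\{l_e(t):0\le t\le t_0,\ e\in E\}\le\operatorname{arccosh}2$, then for all $t\in[0,t_0]$ and all $e\in E$, $$l_e(t)\in[\operatorname{arccosh}(1+\mu_{v(e)}),\operatorname{arccosh}b_{v(e)}]\subset(0,\operatorname{arccosh}2].$$
   Context: A closed pseudo $3$-manifold $(M,\mathcal{T})$: a finite disjoint union $\widehat{\mathcal{T}}$ of tetrahedra with faces glued in pairs by affine homeomorphisms; $\mathcal{T}$ the quotient complex, $E$ its edge set, $P_E$ the quotient map on edges, $v(e)=|P_E^{-1}(e)|$. For an interval $I$, $I^E=\{l: l_e\in I\ \forall e\}$. For $l\in\mathbb{R}^E_{>0}$ each edge $\hat e$ of $\widehat{\mathcal{T}}$ gets length $l_{P_E(\hat e)}$; in a tetrahedron with vertices $i,j,k,h$ let $x_{ab}=\cosh$(length of $ab$) and $$\phi_{ij}=\frac{x_{ik}x_{ih}+x_{jk}x_{jh}+x_{ij}x_{ik}x_{jh}+x_{ij}x_{ih}x_{jk}-x_{ij}^2x_{kh}+x_{kh}}{\sqrt{2x_{ij}x_{ik}x_{jk}+x_{ij}^2+x_{ik}^2+x_{jk}^2-1}\sqrt{2x_{ij}x_{ih}x_{jh}+x_{ij}^2+x_{ih}^2+x_{jh}^2-1}},$$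 dihedral angle $\alpha_{ij}=\arccos(\max\{-1,\min\{\phi_{ij},1\}\})$; $\widetilde K_e(l)=2\pi-\sum_{\hat e\in P_E^{-1}(e)}\alpha(\hat e)$. Extended Ricci flow: $\frac{d}{dt}l_e=\widetilde K_e(l)l_e$, $l(0)=l^0$ (unique solution for all $t\ge0$). Constants: $b_9=2$, $b_n=\frac{16}{1+\cos(2\pi/n)}-7$ ($n\ge10$). $\eta_\xi(y)=\frac{-2-5y+(1+\xi)^2+\sqrt{(2+5y-(1+\xi)^2)^2+4(2+y)(1-y)(1+\xi)^2}}{2+y}$; $\xi_1=0$, $\xi_{k+1}=\eta_{\xi_k}(\cos(2\pi/9))$, $\xi_\infty=\lim_k\xi_k$ (the sequence is nondecreasing and bounded); $\mu_n=\eta_{\xi_\infty}(\cos(2\pi/n))$ for $n\ge9$. *)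

(* Defs.v *)
From mathcomp Require Import all_boot.
From mathcomp Require Import fingroup perm.
From Stdlib Require Import Reals.
From Coquelicot Require Import Coquelicot.

Set Implicit Arguments.
Unset Strict Implicit.
Unset Printing Implicit Defensive.

Local Open Scope R_scope.

Definition arccosh (x : R) : R := ln (x + sqrt (x * x - 1)).

(* A tetrahedron has vertices 'I_4; its face (t,i) is the face opposite
   vertex i.  An edge of the disjoint union of tetrahedra is a pair (t,s)
   with s a 2-element subset of the vertices of t. *)
Definition hedge (tet : finType) : finType :=
  {x : tet * {set 'I_4} | #|x.2| == 2%nat}.

(* one-step gluing relation on edges of hat-T: the edge s of t lying in face
   (t,i) is identified with its image in the glued face. *)
Definition glue_rel (tet : finType) (fpair : tet * 'I_4 -> tet * 'I_4)
    (fmap : tet * 'I_4 -> {perm 'I_4}) : rel (hedge tet) :=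
  fun x y => [exists i : 'I_4,
    (i \notin (val x).2) &&
    (val y == ((fpair ((val x).1, i)).1, fmap ((val x).1, i) @: (val x).2))].

Record pseudo3 := Pseudo3 {
  tet : finType;
  (* faces glued in pairs: fixed-point-free involution (closed: every face glued) *)
  fpair : tet * 'I_4 -> tet * 'I_4;
  fpair_invol : forall f, fpair (fpair f) = f;
  fpair_nofix : forall f, fpair f <> f;
  (* the affine gluing homeomorphism of face f onto face fpair f, given by its
     action on vertices (a vertex bijection sending the opposite vertex of f
     to the opposite vertex of fpair f) *)
  fmap : tet * 'I_4 -> {perm 'I_4};
  fmap_opp : forall f, fmap f f.2 = (fpair f).2;
  fmap_inv : forall f, fmap (fpair f) = (fmap f)^-1%g;
  (* edge set E of the quotient complex and quotient map P_E *)
  edgE : finType;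
  PE : hedge tet -> edgE;
  PE_surj : forall e, exists x, PE x = e;
  PE_ker : forall x y : hedge tet,
      PE x = PE y <-> connect (fun a b => glue_rel fpair fmap a b || glue_rel fpair fmap b a) x y
}.

Definition vdeg (M : pseudo3) (e : edgE M) : nat := #|[set x | PE x == e]|.

Definition elen (M : pseudo3) (l : edgE M -> R) (t : tet M) (a b : 'I_4) : R :=
  match @insub _ (fun x : tet M * {set 'I_4} => #|x.2| == 2%nat) (hedge (tet M))
          (t, [set a; b]) with
  | Some y => l (PE y)
  | None => 0
  end.

Definition phi_formula (xij xik xih xjk xjh xkh : R) : R :=
  (xik * xih + xjk * xjh + xij * xik * xjh + xij * xih * xjk
     - xij ^ 2 * xkh + xkh) /
  (sqrt (2 * xij * xik * xjk + xij ^ 2 + xik ^ 2 + xjk ^ 2 - 1) *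
   sqrt (2 * xij * xih * xjh + xij ^ 2 + xih ^ 2 + xjh ^ 2 - 1)).

Definition dihedral (M : pseudo3) (l : edgE M -> R) (he : hedge (tet M)) : R :=
  let t := (val he).1 in
  let s := (val he).2 in
  let i := nth ord0 (enum s) 0 in
  let j := nth ord0 (enum s) 1 in
  let k := nth ord0 (enum (~: s)) 0 in
  let h := nth ord0 (enum (~: s)) 1 in
  let x := fun a b => cosh (elen l t a b) in
  acos (Rmax (-1) (Rmin (phi_formula (x i j) (x i k) (x i h) (x j k) (x j h) (x k h)) 1)).

Definition Ktilde (M : pseudo3) (l : edgE M -> R) (e : edgE M) : R :=
  2 * PI - \big[Rplus/0]_(x : hedge (tet M) | PE x == e) dihedral l x.

Definition ext_ricci_flow (M : pseudo3) (l0 : edgE M -> R) (l : R -> edgE M -> R) : Prop :=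
  l 0 = l0 /\
  (forall t e, 0 <= t -> 0 < l t e) /\
  (forall e, filterlim (fun s => l s e) (at_right 0) (locally (l0 e))) /\
  (forall t e, 0 < t -> is_derive (fun s => l s e) t (Ktilde (l t) e * l t e)).

Definition b_const (n : nat) : R :=
  if (n == 9)%nat then 2 else 16 / (1 + cos (2 * PI / INR n)) - 7.

Definition eta (xi y : R) : R :=
  (-2 - 5 * y + (1 + xi) ^ 2 +
   sqrt ((2 + 5 * y - (1 + xi) ^ 2) ^ 2 + 4 * (2 + y) * (1 - y) * (1 + xi) ^ 2))
  / (2 + y).

(* xi_seq k = xi_{k+1} *)
Fixpoint xi_seq (k : nat) : R :=
  match k with
  | O => 0
  | S k' => eta (xi_seq k') (cos (2 * PI / 9))
  end.

Definition xi_inf : R := real (Lim_seq xi_seq).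

Definition mu_const (n : nat) : R := eta xi_inf (cos (2 * PI / INR n)).

(* Main.v *)
Require Import Defs.
Set Warnings "-notation-overridden,-ambiguous-paths".
From mathcomp Require Import all_boot.
From mathcomp Require Import fingroup perm.
From Stdlib Require Import Reals Lra Psatz.
From Coquelicot Require Import Coquelicot.
Local Open Scope R_scope.

Lemma cos_lb (x : R) : 0 <= x <= PI/2 -> 1 - x^2/2 <= cos x.
Proof.
  intros Hx. destruct (cos_bound x 0) as [H _]; try lra.
  unfold cos_approx, cos_term in H. simpl in H. lra.
Qed.
Lemma cos_ub (x : R) : 0 <= x <= PI/2 -> cos x <= 1 - x^2/2 + x^4/24.
Proof.
  intros Hx. destruct (cos_bound x 0) as [_ H]; try lra.
  unfold cos_approx, cos_term in H. simpl in H. lra.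
Qed.
Lemma PI_ub : PI <= 16/5.
Proof.
  destruct (Rle_or_lt PI (16/5)) as [H|H]; auto.
  exfalso.
  assert (Hc : 0 < cos (2 * (4/5))).
  { apply cos_gt_0; pose proof PI2_3_2; lra. }
  rewrite cos_2a_cos in Hc.
  pose proof (cos_ub (4/5)) as Hu. pose proof PI2_3_2.
  assert (Hu' : cos (4/5) <= 1 - (4/5)^2/2 + (4/5)^4/24) by (apply Hu; lra).
  assert (0 <= cos (4/5)) by (apply cos_ge_0; lra).
  nra.
Qed.

Lemma cn_facts (n : nat) : (9 <= n)%nat ->
  7/10 <= cos (2*PI/INR n) < 1 /\ acos (cos (2*PI/INR n)) = 2*PI/INR n /\
  ((10 <= n)%nat -> 7/9 <= cos (2*PI/INR n)) /\ 0 < 2*PI/INR n.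
Proof.
  intros Hn.
  assert (H9 : 9 <= INR n) by (replace 9 with (INR 9) by (simpl; lra); apply le_INR; apply/leP; exact Hn).
  pose proof PI_ub as Hpi. pose proof PI2_3_2 as Hpi2.
  set (x := 2*PI/INR n).
  assert (Hx0 : 0 < x) by (unfold x; apply Rdiv_lt_0_compat; lra).
  assert (Hx1 : x * INR n = 2*PI) by (unfold x; field; lra).
  assert (Hx2 : x <= 32/45) by nra.
  split; [split|split; [|split]].
  - pose proof (cos_lb x). nra.
  - rewrite <- cos_0. apply cos_decreasing_1; lra.
  - apply acos_cos; lra.
  - intros H10.
    assert (H10' : 10 <= INR n) by (replace 10 with (INR 10) by (simpl; lra); apply le_INR; apply/leP; exact H10).
    assert (x <= 32/50) by nra.
    pose proof (cos_lb x). nra.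
  - exact Hx0.
Qed.

Lemma sqrt_le_bound (X Y : R) : 0 <= Y -> X <= Y^2 -> sqrt X <= Y.
Proof.
  intros HY HX. rewrite <- (sqrt_pow2 Y HY). apply sqrt_le_1_alt. exact HX.
Qed.

Lemma sqrt_ge_self (A D : R) : 0 <= D -> A <= sqrt (A^2 + D).
Proof.
  intros HD. destruct (Rle_or_lt A 0) as [H|H].
  - pose proof (sqrt_pos (A^2 + D)). lra.
  - rewrite <- (sqrt_pow2 A) at 1 by lra. apply sqrt_le_1_alt. lra.
Qed.

Lemma sqrt_gt_self (A D : R) : 0 < D -> A < sqrt (A^2 + D).
Proof.
  intros HD. destruct (Rle_or_lt A 0) as [H|H].
  - assert (0 < sqrt (A^2 + D)) by (apply sqrt_lt_R0; nra). lra.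
  - rewrite <- (sqrt_pow2 A) at 1 by lra. apply sqrt_lt_1_alt. nra.
Qed.

Lemma div_le_k (n d k : R) : 0 < d -> n <= k * d -> n / d <= k.
Proof.
  intros Hd H. apply Rmult_le_reg_r with d; [lra|].
  unfold Rdiv. rewrite Rmult_assoc Rinv_l; lra.
Qed.

Lemma div_pos' (n d : R) : 0 < d -> 0 <= n -> 0 <= n / d.
Proof. intros. unfold Rdiv. apply Rmult_le_pos; [lra| left; apply Rinv_0_lt_compat; lra]. Qed.

Lemma div_spos (n d : R) : 0 < d -> 0 < n -> 0 < n / d.
Proof. intros. apply Rdiv_lt_0_compat; lra. Qed.

Lemma eta_nonneg (xi y : R) : 0 <= xi -> 0 <= y <= 1 -> 0 <= eta xi y.
Proof.
  intros Hxi Hy. unfold eta. apply div_pos'; [lra|].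
  set (A := 2 + 5*y - (1+xi)^2).
  pose proof (sqrt_ge_self A (4 * (2 + y) * (1 - y) * (1 + xi) ^ 2)).
  assert (0 <= 4 * (2 + y) * (1 - y) * (1 + xi) ^ 2).
  { apply Rmult_le_pos; [|apply pow_le; lra]. apply Rmult_le_pos; [|lra]. lra. }
  unfold A in *. lra.
Qed.

Lemma eta_pos (xi y : R) : 0 <= xi -> 0 <= y < 1 -> 0 < eta xi y.
Proof.
  intros Hxi Hy. unfold eta. apply div_spos; [lra|].
  set (A := 2 + 5*y - (1+xi)^2).
  assert (0 < 4 * (2 + y) * (1 - y) * (1 + xi) ^ 2).
  { apply Rmult_lt_0_compat; [|apply pow_lt; lra]. apply Rmult_lt_0_compat; lra. }
  pose proof (sqrt_gt_self A (4 * (2 + y) * (1 - y) * (1 + xi) ^ 2) H).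
  unfold A in *. lra.
Qed.

Lemma eta_le_quarter (xi y : R) : 0 <= xi <= 1/4 -> 7/10 <= y <= 1 -> eta xi y <= 1/4.
Proof.
  intros Hxi Hy. unfold eta. apply div_le_k; [lra|].
  set (s := (1+xi)^2).
  assert (Hs : 1 <= s <= 25/16) by (unfold s; nra).
  assert (sqrt ((2 + 5 * y - s) ^ 2 + 4 * (2 + y) * (1 - y) * s) <= (2 + 5*y - s) + (2+y)/4).
  { apply sqrt_le_bound; [lra|].
    assert (0 <= (2+y) * ((2 + 5*y - s)/2 + (2+y)/16 - 4*(1-y)*s)).
    { apply Rmult_le_pos; [lra|]. nra. }
    nra. }
  lra.
Qed.

Lemma eta_mu_bound (xi c : R) : 0 <= xi <= 1/4 -> 7/10 <= c < 1 ->
  0 < eta xi c /\ 1 + eta xi c <= (4 - c)/(2 + c).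
Proof.
  intros Hxi Hc. split; [apply eta_pos; lra|].
  assert (eta xi c <= 2*(1-c)/(2+c)).
  { unfold eta. unfold Rdiv at 2. rewrite (Rmult_comm 2 (1-c)).
    apply Rmult_le_compat_r; [left; apply Rinv_0_lt_compat; lra|].
    set (s := (1+xi)^2).
    assert (Hs : 1 <= s <= 25/16) by (unfold s; nra).
    assert (sqrt ((2 + 5 * c - s) ^ 2 + 4 * (2 + c) * (1 - c) * s) <= (2 + 5*c - s) + 2*(1-c)).
    { apply sqrt_le_bound; [lra|].
      assert ((3+c)*s <= 3 + 4*c) by nra.
      assert (0 <= (1-c) * (3 + 4*c - (3+c)*s)) by (apply Rmult_le_pos; lra).
      nra. }
    lra. }
  replace ((4-c)/(2+c)) with (1 + 2*(1-c)/(2+c)) by (field; lra). lra.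
Qed.

Lemma xi_seq_bound (k : nat) : 0 <= xi_seq k <= 1/4.
Proof.
  destruct (cn_facts 9 (leqnn 9)) as [[Hc1 Hc2] _].
  replace (INR 9) with 9 in Hc1, Hc2 by (simpl; lra).
  induction k as [|k IH]; simpl; [lra|].
  split; [apply eta_nonneg; lra| apply eta_le_quarter; lra].
Qed.

Lemma xi_inf_bound : 0 <= xi_inf <= 1/4.
Proof.
  unfold xi_inf.
  assert (H1 : Rbar_le (Lim_seq (fun _ => 0)) (Lim_seq xi_seq)).
  { apply Lim_seq_le_loc. exists 0%nat. intros n _. apply xi_seq_bound. }
  assert (H2 : Rbar_le (Lim_seq xi_seq) (Lim_seq (fun _ => 1/4))).
  { apply Lim_seq_le_loc. exists 0%nat. intros n _. apply xi_seq_bound. }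
  rewrite Lim_seq_const in H1. rewrite Lim_seq_const in H2.
  destruct (Lim_seq xi_seq) as [r| |]; simpl in *; try contradiction. lra.
Qed.

Lemma mu_facts (n : nat) : (9 <= n)%nat ->
  0 < mu_const n /\ 1 + mu_const n <= (4 - cos (2*PI/INR n))/(2 + cos (2*PI/INR n)).
Proof.
  intros Hn. destruct (cn_facts n Hn) as [Hc _].
  unfold mu_const. apply eta_mu_bound; [apply xi_inf_bound| exact Hc].
Qed.

Ltac pos_tac := match goal with
| |- 0 <= _ + _ => apply Rplus_le_le_0_compat; pos_tac
| |- 0 <= _ * _ => apply Rmult_le_pos; pos_tac
| |- 0 <= _ ^ _ => apply pow_le; lra
| |- _ => lra
end.

Lemma up_poly (a p q r s : R) : 1<=a<=2 -> 1<=p<=2 -> 1<=q<=2 -> 1<=r<=2 -> 1<=s<=2 ->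
  0 <= (9-a)^2*(2*a*p*r + a^2 + p^2 + r^2 - 1)*(2*a*q*s + a^2 + q^2 + s^2 - 1) - (a+7)^2*(p*q + r*s + a*(p*s+q*r) + 1 - a^2)^2.
Proof.
  intros [Ha1 Ha2] [Hp1 Hp2] [Hq1 Hq2] [Hr1 Hr2] [Hs1 Hs2].
  assert (H : 0 <= 1 * ((9-a)^2*(2*a*p*r + a^2 + p^2 + r^2 - 1)*(2*a*q*s + a^2 + q^2 + s^2 - 1) - (a+7)^2*(p*q + r*s + a*(p*s+q*r) + 1 - a^2)^2)).
  { replace (1 * ((9-a)^2*(2*a*p*r + a^2 + p^2 + r^2 - 1)*(2*a*q*s + a^2 + q^2 + s^2 - 1) - (a+7)^2*(p*q + r*s + a*(p*s+q*r) + 1 - a^2)^2)) with (1536 * ((a-1)^1 * (2-a)^4 * (2-p)^2 * (2-q)^2 * (2-r)^2 * (2-s)^2) + 3584 * ((a-1)^1 * (2-a)^4 * (2-p)^2 * (2-q)^2 * (2-r)^2 * (s-1)^1 * (2-s)^1) + 1920 * ((a-1)^1 * (2-a)^4 * (2-p)^2 * (2-q)^2 * (2-r)^2 * (s-1)^2) + 3584 * ((a-1)^1 * (2-a)^4 * (2-p)^2 * (2-q)^2 * (r-1)^1 * (2-r)^1 * (2-s)^2) + 8192 * ((a-1)^1 * (2-a)^4 * (2-p)^2 * (2-q)^2 * (r-1)^1 * (2-r)^1 * (s-1)^1 * (2-s)^1) + 4224 * ((a-1)^1 * (2-a)^4 * (2-p)^2 * (2-q)^2 * (r-1)^1 * (2-r)^1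 * (s-1)^2) + 1920 * ((a-1)^1 * (2-a)^4 * (2-p)^2 * (2-q)^2 * (r-1)^2 * (2-s)^2) + 4224 * ((a-1)^1 * (2-a)^4 * (2-p)^2 * (2-q)^2 * (r-1)^2 * (s-1)^1 * (2-s)^1) + 2016 * ((a-1)^1 * (2-a)^4 * (2-p)^2 * (2-q)^2 * (r-1)^2 * (s-1)^2) + 3584 * ((a-1)^1 * (2-a)^4 * (2-p)^2 * (q-1)^1 * (2-q)^1 * (2-r)^2 * (2-s)^2) + 8448 * ((a-1)^1 * (2-a)^4 * (2-p)^2 * (q-1)^1 * (2-q)^1 * (2-r)^2 * (s-1)^1 * (2-s)^1) + 4608 * ((a-1)^1 * (2-a)^4 * (2-p)^2 * (q-1)^1 * (2-q)^1 * (2-r)^2 * (s-1)^2) + 7680 * ((a-1)^1 * (2-a)^4 * (2-p)^2 * (q-1)^1 * (2-q)^1 * (r-1)^1 * (2-r)^1 * (2-s)^2) + 17920 * ((a-1)^1 * (2-a)^4 * (2-p)^2 * (q-1)^1 * (2-q)^1 * (r-1)^1 * (2-r)^1 * (s-1)^1 * (2-s)^1) + 9472 * ((a-1)^1 * (2-a)^4 * (2-p)^2 * (q-1)^1 * (2-q)^1 * (r-1)^1 * (2-r)^1 * (s-1)^2) + 3456 * ((a-1)^1 * (2-a)^4 * (2-p)^2 * (q-1)^1 * (2-q)^1 * (r-1)^2 * (2-s)^2) + 7872 * ((a-1)^1 * (2-a)^4 * (2-p)^2 * (q-1)^1 * (2-q)^1 * (r-1)^2 * (s-1)^1 * (2-s)^1)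 + 3840 * ((a-1)^1 * (2-a)^4 * (2-p)^2 * (q-1)^1 * (2-q)^1 * (r-1)^2 * (s-1)^2) + 1920 * ((a-1)^1 * (2-a)^4 * (2-p)^2 * (q-1)^2 * (2-r)^2 * (2-s)^2) + 4608 * ((a-1)^1 * (2-a)^4 * (2-p)^2 * (q-1)^2 * (2-r)^2 * (s-1)^1 * (2-s)^1) + 2560 * ((a-1)^1 * (2-a)^4 * (2-p)^2 * (q-1)^2 * (2-r)^2 * (s-1)^2) + 3456 * ((a-1)^1 * (2-a)^4 * (2-p)^2 * (q-1)^2 * (r-1)^1 * (2-r)^1 * (2-s)^2) + 8448 * ((a-1)^1 * (2-a)^4 * (2-p)^2 * (q-1)^2 * (r-1)^1 * (2-r)^1 * (s-1)^1 * (2-s)^1) + 4608 * ((a-1)^1 * (2-a)^4 * (2-p)^2 * (q-1)^2 * (r-1)^1 * (2-r)^1 * (s-1)^2) + 864 * ((a-1)^1 * (2-a)^4 * (2-p)^2 * (q-1)^2 * (r-1)^2 * (2-s)^2) + 2304 * ((a-1)^1 * (2-a)^4 * (2-p)^2 * (q-1)^2 * (r-1)^2 * (s-1)^1 * (2-s)^1) + 1152 * ((a-1)^1 * (2-a)^4 * (2-p)^2 * (q-1)^2 * (r-1)^2 * (s-1)^2) + 3584 * ((a-1)^1 * (2-a)^4 * (p-1)^1 * (2-p)^1 * (2-q)^2 * (2-r)^2 * (2-s)^2) + 7680 * ((a-1)^1 * (2-a)^4 * (p-1)^1 * (2-p)^1 * (2-q)^2 * (2-r)^2 * (s-1)^1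 * (2-s)^1) + 3456 * ((a-1)^1 * (2-a)^4 * (p-1)^1 * (2-p)^1 * (2-q)^2 * (2-r)^2 * (s-1)^2) + 8448 * ((a-1)^1 * (2-a)^4 * (p-1)^1 * (2-p)^1 * (2-q)^2 * (r-1)^1 * (2-r)^1 * (2-s)^2) + 17920 * ((a-1)^1 * (2-a)^4 * (p-1)^1 * (2-p)^1 * (2-q)^2 * (r-1)^1 * (2-r)^1 * (s-1)^1 * (2-s)^1) + 7872 * ((a-1)^1 * (2-a)^4 * (p-1)^1 * (2-p)^1 * (2-q)^2 * (r-1)^1 * (2-r)^1 * (s-1)^2) + 4608 * ((a-1)^1 * (2-a)^4 * (p-1)^1 * (2-p)^1 * (2-q)^2 * (r-1)^2 * (2-s)^2) + 9472 * ((a-1)^1 * (2-a)^4 * (p-1)^1 * (2-p)^1 * (2-q)^2 * (r-1)^2 * (s-1)^1 * (2-s)^1) + 3840 * ((a-1)^1 * (2-a)^4 * (p-1)^1 * (2-p)^1 * (2-q)^2 * (r-1)^2 * (s-1)^2) + 8192 * ((a-1)^1 * (2-a)^4 * (p-1)^1 * (2-p)^1 * (q-1)^1 * (2-q)^1 * (2-r)^2 * (2-s)^2) + 17920 * ((a-1)^1 * (2-a)^4 * (p-1)^1 * (2-p)^1 * (q-1)^1 * (2-q)^1 * (2-r)^2 * (s-1)^1 * (2-s)^1) + 8448 * ((a-1)^1 * (2-a)^4 * (p-1)^1 * (2-p)^1 * (q-1)^1 * (2-q)^1 * (2-r)^2 * (s-1)^2) + 17920 * ((a-1)^1 * (2-a)^4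 * (p-1)^1 * (2-p)^1 * (q-1)^1 * (2-q)^1 * (r-1)^1 * (2-r)^1 * (2-s)^2) + 39040 * ((a-1)^1 * (2-a)^4 * (p-1)^1 * (2-p)^1 * (q-1)^1 * (2-q)^1 * (r-1)^1 * (2-r)^1 * (s-1)^1 * (2-s)^1) + 17920 * ((a-1)^1 * (2-a)^4 * (p-1)^1 * (2-p)^1 * (q-1)^1 * (2-q)^1 * (r-1)^1 * (2-r)^1 * (s-1)^2) + 8448 * ((a-1)^1 * (2-a)^4 * (p-1)^1 * (2-p)^1 * (q-1)^1 * (2-q)^1 * (r-1)^2 * (2-s)^2) + 17920 * ((a-1)^1 * (2-a)^4 * (p-1)^1 * (2-p)^1 * (q-1)^1 * (2-q)^1 * (r-1)^2 * (s-1)^1 * (2-s)^1) + 7424 * ((a-1)^1 * (2-a)^4 * (p-1)^1 * (2-p)^1 * (q-1)^1 * (2-q)^1 * (r-1)^2 * (s-1)^2) + 4224 * ((a-1)^1 * (2-a)^4 * (p-1)^1 * (2-p)^1 * (q-1)^2 * (2-r)^2 * (2-s)^2) + 9472 * ((a-1)^1 * (2-a)^4 * (p-1)^1 * (2-p)^1 * (q-1)^2 * (2-r)^2 * (s-1)^1 * (2-s)^1) + 4608 * ((a-1)^1 * (2-a)^4 * (p-1)^1 * (2-p)^1 * (q-1)^2 * (2-r)^2 * (s-1)^2) + 7872 * ((a-1)^1 * (2-a)^4 * (p-1)^1 * (2-p)^1 * (q-1)^2 * (r-1)^1 * (2-r)^1 * (2-s)^2) + 17920 * ((a-1)^1 *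 (2-a)^4 * (p-1)^1 * (2-p)^1 * (q-1)^2 * (r-1)^1 * (2-r)^1 * (s-1)^1 * (2-s)^1) + 8448 * ((a-1)^1 * (2-a)^4 * (p-1)^1 * (2-p)^1 * (q-1)^2 * (r-1)^1 * (2-r)^1 * (s-1)^2) + 2304 * ((a-1)^1 * (2-a)^4 * (p-1)^1 * (2-p)^1 * (q-1)^2 * (r-1)^2 * (2-s)^2) + 5376 * ((a-1)^1 * (2-a)^4 * (p-1)^1 * (2-p)^1 * (q-1)^2 * (r-1)^2 * (s-1)^1 * (2-s)^1) + 2048 * ((a-1)^1 * (2-a)^4 * (p-1)^1 * (2-p)^1 * (q-1)^2 * (r-1)^2 * (s-1)^2) + 1920 * ((a-1)^1 * (2-a)^4 * (p-1)^2 * (2-q)^2 * (2-r)^2 * (2-s)^2) + 3456 * ((a-1)^1 * (2-a)^4 * (p-1)^2 * (2-q)^2 * (2-r)^2 * (s-1)^1 * (2-s)^1) + 864 * ((a-1)^1 * (2-a)^4 * (p-1)^2 * (2-q)^2 * (2-r)^2 * (s-1)^2) + 4608 * ((a-1)^1 * (2-a)^4 * (p-1)^2 * (2-q)^2 * (r-1)^1 * (2-r)^1 * (2-s)^2) + 8448 * ((a-1)^1 * (2-a)^4 * (p-1)^2 * (2-q)^2 * (r-1)^1 * (2-r)^1 * (s-1)^1 * (2-s)^1) + 2304 * ((a-1)^1 * (2-a)^4 * (p-1)^2 * (2-q)^2 * (r-1)^1 * (2-r)^1 * (s-1)^2) + 2560 * ((a-1)^1 * (2-a)^4 * (p-1)^2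 * (2-q)^2 * (r-1)^2 * (2-s)^2) + 4608 * ((a-1)^1 * (2-a)^4 * (p-1)^2 * (2-q)^2 * (r-1)^2 * (s-1)^1 * (2-s)^1) + 1152 * ((a-1)^1 * (2-a)^4 * (p-1)^2 * (2-q)^2 * (r-1)^2 * (s-1)^2) + 4224 * ((a-1)^1 * (2-a)^4 * (p-1)^2 * (q-1)^1 * (2-q)^1 * (2-r)^2 * (2-s)^2) + 7872 * ((a-1)^1 * (2-a)^4 * (p-1)^2 * (q-1)^1 * (2-q)^1 * (2-r)^2 * (s-1)^1 * (2-s)^1) + 2304 * ((a-1)^1 * (2-a)^4 * (p-1)^2 * (q-1)^1 * (2-q)^1 * (2-r)^2 * (s-1)^2) + 9472 * ((a-1)^1 * (2-a)^4 * (p-1)^2 * (q-1)^1 * (2-q)^1 * (r-1)^1 * (2-r)^1 * (2-s)^2) + 17920 * ((a-1)^1 * (2-a)^4 * (p-1)^2 * (q-1)^1 * (2-q)^1 * (r-1)^1 * (2-r)^1 * (s-1)^1 * (2-s)^1) + 5376 * ((a-1)^1 * (2-a)^4 * (p-1)^2 * (q-1)^1 * (2-q)^1 * (r-1)^1 * (2-r)^1 * (s-1)^2) + 4608 * ((a-1)^1 * (2-a)^4 * (p-1)^2 * (q-1)^1 * (2-q)^1 * (r-1)^2 * (2-s)^2) + 8448 * ((a-1)^1 * (2-a)^4 * (p-1)^2 * (q-1)^1 * (2-q)^1 * (r-1)^2 * (s-1)^1 * (2-s)^1) + 2048 * ((a-1)^1 * (2-a)^4 * (p-1)^2 * (q-1)^1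 * (2-q)^1 * (r-1)^2 * (s-1)^2) + 2016 * ((a-1)^1 * (2-a)^4 * (p-1)^2 * (q-1)^2 * (2-r)^2 * (2-s)^2) + 3840 * ((a-1)^1 * (2-a)^4 * (p-1)^2 * (q-1)^2 * (2-r)^2 * (s-1)^1 * (2-s)^1) + 1152 * ((a-1)^1 * (2-a)^4 * (p-1)^2 * (q-1)^2 * (2-r)^2 * (s-1)^2) + 3840 * ((a-1)^1 * (2-a)^4 * (p-1)^2 * (q-1)^2 * (r-1)^1 * (2-r)^1 * (2-s)^2) + 7424 * ((a-1)^1 * (2-a)^4 * (p-1)^2 * (q-1)^2 * (r-1)^1 * (2-r)^1 * (s-1)^1 * (2-s)^1) + 2048 * ((a-1)^1 * (2-a)^4 * (p-1)^2 * (q-1)^2 * (r-1)^1 * (2-r)^1 * (s-1)^2) + 1152 * ((a-1)^1 * (2-a)^4 * (p-1)^2 * (q-1)^2 * (r-1)^2 * (2-s)^2) + 2048 * ((a-1)^1 * (2-a)^4 * (p-1)^2 * (q-1)^2 * (r-1)^2 * (s-1)^1 * (2-s)^1) + 7680 * ((a-1)^2 * (2-a)^3 * (2-p)^2 * (2-q)^2 * (2-r)^2 * (2-s)^2) + 17920 * ((a-1)^2 * (2-a)^3 * (2-p)^2 * (2-q)^2 * (2-r)^2 * (s-1)^1 * (2-s)^1) + 9600 * ((a-1)^2 * (2-a)^3 * (2-p)^2 * (2-q)^2 * (2-r)^2 * (s-1)^2) + 17920 * ((a-1)^2 * (2-a)^3 * (2-p)^2 * (2-q)^2 * (r-1)^1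 * (2-r)^1 * (2-s)^2) + 40832 * ((a-1)^2 * (2-a)^3 * (2-p)^2 * (2-q)^2 * (r-1)^1 * (2-r)^1 * (s-1)^1 * (2-s)^1) + 21056 * ((a-1)^2 * (2-a)^3 * (2-p)^2 * (2-q)^2 * (r-1)^1 * (2-r)^1 * (s-1)^2) + 9600 * ((a-1)^2 * (2-a)^3 * (2-p)^2 * (2-q)^2 * (r-1)^2 * (2-s)^2) + 21056 * ((a-1)^2 * (2-a)^3 * (2-p)^2 * (2-q)^2 * (r-1)^2 * (s-1)^1 * (2-s)^1) + 10112 * ((a-1)^2 * (2-a)^3 * (2-p)^2 * (2-q)^2 * (r-1)^2 * (s-1)^2) + 17920 * ((a-1)^2 * (2-a)^3 * (2-p)^2 * (q-1)^1 * (2-q)^1 * (2-r)^2 * (2-s)^2) + 42112 * ((a-1)^2 * (2-a)^3 * (2-p)^2 * (q-1)^1 * (2-q)^1 * (2-r)^2 * (s-1)^1 * (2-s)^1) + 22912 * ((a-1)^2 * (2-a)^3 * (2-p)^2 * (q-1)^1 * (2-q)^1 * (2-r)^2 * (s-1)^2) + 38656 * ((a-1)^2 * (2-a)^3 * (2-p)^2 * (q-1)^1 * (2-q)^1 * (r-1)^1 * (2-r)^1 * (2-s)^2) + 89408 * ((a-1)^2 * (2-a)^3 * (2-p)^2 * (q-1)^1 * (2-q)^1 * (r-1)^1 * (2-r)^1 * (s-1)^1 * (2-s)^1) + 47040 * ((a-1)^2 * (2-a)^3 * (2-p)^2 * (q-1)^1 * (2-q)^1 * (r-1)^1 * (2-r)^1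 * (s-1)^2) + 17664 * ((a-1)^2 * (2-a)^3 * (2-p)^2 * (q-1)^1 * (2-q)^1 * (r-1)^2 * (2-s)^2) + 39680 * ((a-1)^2 * (2-a)^3 * (2-p)^2 * (q-1)^1 * (2-q)^1 * (r-1)^2 * (s-1)^1 * (2-s)^1) + 19328 * ((a-1)^2 * (2-a)^3 * (2-p)^2 * (q-1)^1 * (2-q)^1 * (r-1)^2 * (s-1)^2) + 9600 * ((a-1)^2 * (2-a)^3 * (2-p)^2 * (q-1)^2 * (2-r)^2 * (2-s)^2) + 22912 * ((a-1)^2 * (2-a)^3 * (2-p)^2 * (q-1)^2 * (2-r)^2 * (s-1)^1 * (2-s)^1) + 12672 * ((a-1)^2 * (2-a)^3 * (2-p)^2 * (q-1)^2 * (2-r)^2 * (s-1)^2) + 17664 * ((a-1)^2 * (2-a)^3 * (2-p)^2 * (q-1)^2 * (r-1)^1 * (2-r)^1 * (2-s)^2) + 42432 * ((a-1)^2 * (2-a)^3 * (2-p)^2 * (q-1)^2 * (r-1)^1 * (2-r)^1 * (s-1)^1 * (2-s)^1) + 22912 * ((a-1)^2 * (2-a)^3 * (2-p)^2 * (q-1)^2 * (r-1)^1 * (2-r)^1 * (s-1)^2) + 4896 * ((a-1)^2 * (2-a)^3 * (2-p)^2 * (q-1)^2 * (r-1)^2 * (2-s)^2) + 12288 * ((a-1)^2 * (2-a)^3 * (2-p)^2 * (q-1)^2 * (r-1)^2 * (s-1)^1 * (2-s)^1) + 6048 * ((a-1)^2 * (2-a)^3 * (2-p)^2 * (q-1)^2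 * (r-1)^2 * (s-1)^2) + 17920 * ((a-1)^2 * (2-a)^3 * (p-1)^1 * (2-p)^1 * (2-q)^2 * (2-r)^2 * (2-s)^2) + 38656 * ((a-1)^2 * (2-a)^3 * (p-1)^1 * (2-p)^1 * (2-q)^2 * (2-r)^2 * (s-1)^1 * (2-s)^1) + 17664 * ((a-1)^2 * (2-a)^3 * (p-1)^1 * (2-p)^1 * (2-q)^2 * (2-r)^2 * (s-1)^2) + 42112 * ((a-1)^2 * (2-a)^3 * (p-1)^1 * (2-p)^1 * (2-q)^2 * (r-1)^1 * (2-r)^1 * (2-s)^2) + 89408 * ((a-1)^2 * (2-a)^3 * (p-1)^1 * (2-p)^1 * (2-q)^2 * (r-1)^1 * (2-r)^1 * (s-1)^1 * (2-s)^1) + 39680 * ((a-1)^2 * (2-a)^3 * (p-1)^1 * (2-p)^1 * (2-q)^2 * (r-1)^1 * (2-r)^1 * (s-1)^2) + 22912 * ((a-1)^2 * (2-a)^3 * (p-1)^1 * (2-p)^1 * (2-q)^2 * (r-1)^2 * (2-s)^2) + 47040 * ((a-1)^2 * (2-a)^3 * (p-1)^1 * (2-p)^1 * (2-q)^2 * (r-1)^2 * (s-1)^1 * (2-s)^1) + 19328 * ((a-1)^2 * (2-a)^3 * (p-1)^1 * (2-p)^1 * (2-q)^2 * (r-1)^2 * (s-1)^2) + 40832 * ((a-1)^2 * (2-a)^3 * (p-1)^1 * (2-p)^1 * (q-1)^1 * (2-q)^1 * (2-r)^2 * (2-s)^2) + 89408 * ((a-1)^2 * (2-a)^3 * (p-1)^1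 * (2-p)^1 * (q-1)^1 * (2-q)^1 * (2-r)^2 * (s-1)^1 * (2-s)^1) + 42432 * ((a-1)^2 * (2-a)^3 * (p-1)^1 * (2-p)^1 * (q-1)^1 * (2-q)^1 * (2-r)^2 * (s-1)^2) + 89408 * ((a-1)^2 * (2-a)^3 * (p-1)^1 * (2-p)^1 * (q-1)^1 * (2-q)^1 * (r-1)^1 * (2-r)^1 * (2-s)^2) + 193472 * ((a-1)^2 * (2-a)^3 * (p-1)^1 * (2-p)^1 * (q-1)^1 * (2-q)^1 * (r-1)^1 * (2-r)^1 * (s-1)^1 * (2-s)^1) + 88832 * ((a-1)^2 * (2-a)^3 * (p-1)^1 * (2-p)^1 * (q-1)^1 * (2-q)^1 * (r-1)^1 * (2-r)^1 * (s-1)^2) + 42432 * ((a-1)^2 * (2-a)^3 * (p-1)^1 * (2-p)^1 * (q-1)^1 * (2-q)^1 * (r-1)^2 * (2-s)^2) + 88832 * ((a-1)^2 * (2-a)^3 * (p-1)^1 * (2-p)^1 * (q-1)^1 * (2-q)^1 * (r-1)^2 * (s-1)^1 * (2-s)^1) + 36800 * ((a-1)^2 * (2-a)^3 * (p-1)^1 * (2-p)^1 * (q-1)^1 * (2-q)^1 * (r-1)^2 * (s-1)^2) + 21056 * ((a-1)^2 * (2-a)^3 * (p-1)^1 * (2-p)^1 * (q-1)^2 * (2-r)^2 * (2-s)^2) + 47040 * ((a-1)^2 * (2-a)^3 * (p-1)^1 * (2-p)^1 * (q-1)^2 * (2-r)^2 * (s-1)^1 * (2-s)^1) + 22912 * ((a-1)^2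 * (2-a)^3 * (p-1)^1 * (2-p)^1 * (q-1)^2 * (2-r)^2 * (s-1)^2) + 39680 * ((a-1)^2 * (2-a)^3 * (p-1)^1 * (2-p)^1 * (q-1)^2 * (r-1)^1 * (2-r)^1 * (2-s)^2) + 88832 * ((a-1)^2 * (2-a)^3 * (p-1)^1 * (2-p)^1 * (q-1)^2 * (r-1)^1 * (2-r)^1 * (s-1)^1 * (2-s)^1) + 41536 * ((a-1)^2 * (2-a)^3 * (p-1)^1 * (2-p)^1 * (q-1)^2 * (r-1)^1 * (2-r)^1 * (s-1)^2) + 12288 * ((a-1)^2 * (2-a)^3 * (p-1)^1 * (2-p)^1 * (q-1)^2 * (r-1)^2 * (2-s)^2) + 27328 * ((a-1)^2 * (2-a)^3 * (p-1)^1 * (2-p)^1 * (q-1)^2 * (r-1)^2 * (s-1)^1 * (2-s)^1) + 10240 * ((a-1)^2 * (2-a)^3 * (p-1)^1 * (2-p)^1 * (q-1)^2 * (r-1)^2 * (s-1)^2) + 9600 * ((a-1)^2 * (2-a)^3 * (p-1)^2 * (2-q)^2 * (2-r)^2 * (2-s)^2) + 17664 * ((a-1)^2 * (2-a)^3 * (p-1)^2 * (2-q)^2 * (2-r)^2 * (s-1)^1 * (2-s)^1) + 4896 * ((a-1)^2 * (2-a)^3 * (p-1)^2 * (2-q)^2 * (2-r)^2 * (s-1)^2) + 22912 * ((a-1)^2 * (2-a)^3 * (p-1)^2 * (2-q)^2 * (r-1)^1 * (2-r)^1 * (2-s)^2) + 42432 * ((a-1)^2 * (2-a)^3 * (p-1)^2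 * (2-q)^2 * (r-1)^1 * (2-r)^1 * (s-1)^1 * (2-s)^1) + 12288 * ((a-1)^2 * (2-a)^3 * (p-1)^2 * (2-q)^2 * (r-1)^1 * (2-r)^1 * (s-1)^2) + 12672 * ((a-1)^2 * (2-a)^3 * (p-1)^2 * (2-q)^2 * (r-1)^2 * (2-s)^2) + 22912 * ((a-1)^2 * (2-a)^3 * (p-1)^2 * (2-q)^2 * (r-1)^2 * (s-1)^1 * (2-s)^1) + 6048 * ((a-1)^2 * (2-a)^3 * (p-1)^2 * (2-q)^2 * (r-1)^2 * (s-1)^2) + 21056 * ((a-1)^2 * (2-a)^3 * (p-1)^2 * (q-1)^1 * (2-q)^1 * (2-r)^2 * (2-s)^2) + 39680 * ((a-1)^2 * (2-a)^3 * (p-1)^2 * (q-1)^1 * (2-q)^1 * (2-r)^2 * (s-1)^1 * (2-s)^1) + 12288 * ((a-1)^2 * (2-a)^3 * (p-1)^2 * (q-1)^1 * (2-q)^1 * (2-r)^2 * (s-1)^2) + 47040 * ((a-1)^2 * (2-a)^3 * (p-1)^2 * (q-1)^1 * (2-q)^1 * (r-1)^1 * (2-r)^1 * (2-s)^2) + 88832 * ((a-1)^2 * (2-a)^3 * (p-1)^2 * (q-1)^1 * (2-q)^1 * (r-1)^1 * (2-r)^1 * (s-1)^1 * (2-s)^1) + 27328 * ((a-1)^2 * (2-a)^3 * (p-1)^2 * (q-1)^1 * (2-q)^1 * (r-1)^1 * (2-r)^1 * (s-1)^2) + 22912 * ((a-1)^2 * (2-a)^3 * (p-1)^2 * (q-1)^1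 * (2-q)^1 * (r-1)^2 * (2-s)^2) + 41536 * ((a-1)^2 * (2-a)^3 * (p-1)^2 * (q-1)^1 * (2-q)^1 * (r-1)^2 * (s-1)^1 * (2-s)^1) + 10240 * ((a-1)^2 * (2-a)^3 * (p-1)^2 * (q-1)^1 * (2-q)^1 * (r-1)^2 * (s-1)^2) + 10112 * ((a-1)^2 * (2-a)^3 * (p-1)^2 * (q-1)^2 * (2-r)^2 * (2-s)^2) + 19328 * ((a-1)^2 * (2-a)^3 * (p-1)^2 * (q-1)^2 * (2-r)^2 * (s-1)^1 * (2-s)^1) + 6048 * ((a-1)^2 * (2-a)^3 * (p-1)^2 * (q-1)^2 * (2-r)^2 * (s-1)^2) + 19328 * ((a-1)^2 * (2-a)^3 * (p-1)^2 * (q-1)^2 * (r-1)^1 * (2-r)^1 * (2-s)^2) + 36800 * ((a-1)^2 * (2-a)^3 * (p-1)^2 * (q-1)^2 * (r-1)^1 * (2-r)^1 * (s-1)^1 * (2-s)^1) + 10240 * ((a-1)^2 * (2-a)^3 * (p-1)^2 * (q-1)^2 * (r-1)^1 * (2-r)^1 * (s-1)^2) + 6048 * ((a-1)^2 * (2-a)^3 * (p-1)^2 * (q-1)^2 * (r-1)^2 * (2-s)^2) + 10240 * ((a-1)^2 * (2-a)^3 * (p-1)^2 * (q-1)^2 * (r-1)^2 * (s-1)^1 * (2-s)^1) + 14112 * ((a-1)^3 * (2-a)^2 * (2-p)^2 * (2-q)^2 * (2-r)^2 * (2-s)^2) + 32976 * ((a-1)^3 * (2-a)^2 * (2-p)^2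 * (2-q)^2 * (2-r)^2 * (s-1)^1 * (2-s)^1) + 17680 * ((a-1)^3 * (2-a)^2 * (2-p)^2 * (2-q)^2 * (2-r)^2 * (s-1)^2) + 32976 * ((a-1)^3 * (2-a)^2 * (2-p)^2 * (2-q)^2 * (r-1)^1 * (2-r)^1 * (2-s)^2) + 75016 * ((a-1)^3 * (2-a)^2 * (2-p)^2 * (2-q)^2 * (r-1)^1 * (2-r)^1 * (s-1)^1 * (2-s)^1) + 38712 * ((a-1)^3 * (2-a)^2 * (2-p)^2 * (2-q)^2 * (r-1)^1 * (2-r)^1 * (s-1)^2) + 17680 * ((a-1)^3 * (2-a)^2 * (2-p)^2 * (2-q)^2 * (r-1)^2 * (2-s)^2) + 38712 * ((a-1)^3 * (2-a)^2 * (2-p)^2 * (2-q)^2 * (r-1)^2 * (s-1)^1 * (2-s)^1) + 18696 * ((a-1)^3 * (2-a)^2 * (2-p)^2 * (2-q)^2 * (r-1)^2 * (s-1)^2) + 32976 * ((a-1)^3 * (2-a)^2 * (2-p)^2 * (q-1)^1 * (2-q)^1 * (2-r)^2 * (2-s)^2) + 77320 * ((a-1)^3 * (2-a)^2 * (2-p)^2 * (q-1)^1 * (2-q)^1 * (2-r)^2 * (s-1)^1 * (2-s)^1) + 41976 * ((a-1)^3 * (2-a)^2 * (2-p)^2 * (q-1)^1 * (2-q)^1 * (2-r)^2 * (s-1)^2) + 71680 * ((a-1)^3 * (2-a)^2 * (2-p)^2 * (q-1)^1 * (2-q)^1 * (r-1)^1 * (2-r)^1 * (2-s)^2) + 164548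 * ((a-1)^3 * (2-a)^2 * (2-p)^2 * (q-1)^1 * (2-q)^1 * (r-1)^1 * (2-r)^1 * (s-1)^1 * (2-s)^1) + 86212 * ((a-1)^3 * (2-a)^2 * (2-p)^2 * (q-1)^1 * (2-q)^1 * (r-1)^1 * (2-r)^1 * (s-1)^2) + 33228 * ((a-1)^3 * (2-a)^2 * (2-p)^2 * (q-1)^1 * (2-q)^1 * (r-1)^2 * (2-s)^2) + 73780 * ((a-1)^3 * (2-a)^2 * (2-p)^2 * (q-1)^1 * (2-q)^1 * (r-1)^2 * (s-1)^1 * (2-s)^1) + 35880 * ((a-1)^3 * (2-a)^2 * (2-p)^2 * (q-1)^1 * (2-q)^1 * (r-1)^2 * (s-1)^2) + 17680 * ((a-1)^3 * (2-a)^2 * (2-p)^2 * (q-1)^2 * (2-r)^2 * (2-s)^2) + 41976 * ((a-1)^3 * (2-a)^2 * (2-p)^2 * (q-1)^2 * (2-r)^2 * (s-1)^1 * (2-s)^1) + 23112 * ((a-1)^3 * (2-a)^2 * (2-p)^2 * (q-1)^2 * (2-r)^2 * (s-1)^2) + 33228 * ((a-1)^3 * (2-a)^2 * (2-p)^2 * (q-1)^2 * (r-1)^1 * (2-r)^1 * (2-s)^2) + 78580 * ((a-1)^3 * (2-a)^2 * (2-p)^2 * (q-1)^2 * (r-1)^1 * (2-r)^1 * (s-1)^1 * (2-s)^1) + 42024 * ((a-1)^3 * (2-a)^2 * (2-p)^2 * (q-1)^2 * (r-1)^1 * (2-r)^1 * (s-1)^2) + 9990 * ((a-1)^3 * (2-a)^2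 * (2-p)^2 * (q-1)^2 * (r-1)^2 * (2-s)^2) + 23952 * ((a-1)^3 * (2-a)^2 * (2-p)^2 * (q-1)^2 * (r-1)^2 * (s-1)^1 * (2-s)^1) + 11626 * ((a-1)^3 * (2-a)^2 * (2-p)^2 * (q-1)^2 * (r-1)^2 * (s-1)^2) + 32976 * ((a-1)^3 * (2-a)^2 * (p-1)^1 * (2-p)^1 * (2-q)^2 * (2-r)^2 * (2-s)^2) + 71680 * ((a-1)^3 * (2-a)^2 * (p-1)^1 * (2-p)^1 * (2-q)^2 * (2-r)^2 * (s-1)^1 * (2-s)^1) + 33228 * ((a-1)^3 * (2-a)^2 * (p-1)^1 * (2-p)^1 * (2-q)^2 * (2-r)^2 * (s-1)^2) + 77320 * ((a-1)^3 * (2-a)^2 * (p-1)^1 * (2-p)^1 * (2-q)^2 * (r-1)^1 * (2-r)^1 * (2-s)^2) + 164548 * ((a-1)^3 * (2-a)^2 * (p-1)^1 * (2-p)^1 * (2-q)^2 * (r-1)^1 * (2-r)^1 * (s-1)^1 * (2-s)^1) + 73780 * ((a-1)^3 * (2-a)^2 * (p-1)^1 * (2-p)^1 * (2-q)^2 * (r-1)^1 * (2-r)^1 * (s-1)^2) + 41976 * ((a-1)^3 * (2-a)^2 * (p-1)^1 * (2-p)^1 * (2-q)^2 * (r-1)^2 * (2-s)^2) + 86212 * ((a-1)^3 * (2-a)^2 * (p-1)^1 * (2-p)^1 * (2-q)^2 * (r-1)^2 * (s-1)^1 * (2-s)^1) + 35880 * ((a-1)^3 * (2-a)^2 * (p-1)^1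 * (2-p)^1 * (2-q)^2 * (r-1)^2 * (s-1)^2) + 75016 * ((a-1)^3 * (2-a)^2 * (p-1)^1 * (2-p)^1 * (q-1)^1 * (2-q)^1 * (2-r)^2 * (2-s)^2) + 164548 * ((a-1)^3 * (2-a)^2 * (p-1)^1 * (2-p)^1 * (q-1)^1 * (2-q)^1 * (2-r)^2 * (s-1)^1 * (2-s)^1) + 78580 * ((a-1)^3 * (2-a)^2 * (p-1)^1 * (2-p)^1 * (q-1)^1 * (2-q)^1 * (2-r)^2 * (s-1)^2) + 164548 * ((a-1)^3 * (2-a)^2 * (p-1)^1 * (2-p)^1 * (q-1)^1 * (2-q)^1 * (r-1)^1 * (2-r)^1 * (2-s)^2) + 354180 * ((a-1)^3 * (2-a)^2 * (p-1)^1 * (2-p)^1 * (q-1)^1 * (2-q)^1 * (r-1)^1 * (2-r)^1 * (s-1)^1 * (2-s)^1) + 162736 * ((a-1)^3 * (2-a)^2 * (p-1)^1 * (2-p)^1 * (q-1)^1 * (2-q)^1 * (r-1)^1 * (2-r)^1 * (s-1)^2) + 78580 * ((a-1)^3 * (2-a)^2 * (p-1)^1 * (2-p)^1 * (q-1)^1 * (2-q)^1 * (r-1)^2 * (2-s)^2) + 162736 * ((a-1)^3 * (2-a)^2 * (p-1)^1 * (2-p)^1 * (q-1)^1 * (2-q)^1 * (r-1)^2 * (s-1)^1 * (2-s)^1) + 67444 * ((a-1)^3 * (2-a)^2 * (p-1)^1 * (2-p)^1 * (q-1)^1 * (2-q)^1 * (r-1)^2 * (s-1)^2) + 38712 * ((a-1)^3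 * (2-a)^2 * (p-1)^1 * (2-p)^1 * (q-1)^2 * (2-r)^2 * (2-s)^2) + 86212 * ((a-1)^3 * (2-a)^2 * (p-1)^1 * (2-p)^1 * (q-1)^2 * (2-r)^2 * (s-1)^1 * (2-s)^1) + 42024 * ((a-1)^3 * (2-a)^2 * (p-1)^1 * (2-p)^1 * (q-1)^2 * (2-r)^2 * (s-1)^2) + 73780 * ((a-1)^3 * (2-a)^2 * (p-1)^1 * (2-p)^1 * (q-1)^2 * (r-1)^1 * (2-r)^1 * (2-s)^2) + 162736 * ((a-1)^3 * (2-a)^2 * (p-1)^1 * (2-p)^1 * (q-1)^2 * (r-1)^1 * (2-r)^1 * (s-1)^1 * (2-s)^1) + 75508 * ((a-1)^3 * (2-a)^2 * (p-1)^1 * (2-p)^1 * (q-1)^2 * (r-1)^1 * (2-r)^1 * (s-1)^2) + 23952 * ((a-1)^3 * (2-a)^2 * (p-1)^1 * (2-p)^1 * (q-1)^2 * (r-1)^2 * (2-s)^2) + 51220 * ((a-1)^3 * (2-a)^2 * (p-1)^1 * (2-p)^1 * (q-1)^2 * (r-1)^2 * (s-1)^1 * (2-s)^1) + 18912 * ((a-1)^3 * (2-a)^2 * (p-1)^1 * (2-p)^1 * (q-1)^2 * (r-1)^2 * (s-1)^2) + 17680 * ((a-1)^3 * (2-a)^2 * (p-1)^2 * (2-q)^2 * (2-r)^2 * (2-s)^2) + 33228 * ((a-1)^3 * (2-a)^2 * (p-1)^2 * (2-q)^2 * (2-r)^2 * (s-1)^1 * (2-s)^1) + 9990 * ((a-1)^3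 * (2-a)^2 * (p-1)^2 * (2-q)^2 * (2-r)^2 * (s-1)^2) + 41976 * ((a-1)^3 * (2-a)^2 * (p-1)^2 * (2-q)^2 * (r-1)^1 * (2-r)^1 * (2-s)^2) + 78580 * ((a-1)^3 * (2-a)^2 * (p-1)^2 * (2-q)^2 * (r-1)^1 * (2-r)^1 * (s-1)^1 * (2-s)^1) + 23952 * ((a-1)^3 * (2-a)^2 * (p-1)^2 * (2-q)^2 * (r-1)^1 * (2-r)^1 * (s-1)^2) + 23112 * ((a-1)^3 * (2-a)^2 * (p-1)^2 * (2-q)^2 * (r-1)^2 * (2-s)^2) + 42024 * ((a-1)^3 * (2-a)^2 * (p-1)^2 * (2-q)^2 * (r-1)^2 * (s-1)^1 * (2-s)^1) + 11626 * ((a-1)^3 * (2-a)^2 * (p-1)^2 * (2-q)^2 * (r-1)^2 * (s-1)^2) + 38712 * ((a-1)^3 * (2-a)^2 * (p-1)^2 * (q-1)^1 * (2-q)^1 * (2-r)^2 * (2-s)^2) + 73780 * ((a-1)^3 * (2-a)^2 * (p-1)^2 * (q-1)^1 * (2-q)^1 * (2-r)^2 * (s-1)^1 * (2-s)^1) + 23952 * ((a-1)^3 * (2-a)^2 * (p-1)^2 * (q-1)^1 * (2-q)^1 * (2-r)^2 * (s-1)^2) + 86212 * ((a-1)^3 * (2-a)^2 * (p-1)^2 * (q-1)^1 * (2-q)^1 * (r-1)^1 * (2-r)^1 * (2-s)^2) + 162736 * ((a-1)^3 * (2-a)^2 * (p-1)^2 * (q-1)^1 * (2-q)^1 * (r-1)^1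 * (2-r)^1 * (s-1)^1 * (2-s)^1) + 51220 * ((a-1)^3 * (2-a)^2 * (p-1)^2 * (q-1)^1 * (2-q)^1 * (r-1)^1 * (2-r)^1 * (s-1)^2) + 42024 * ((a-1)^3 * (2-a)^2 * (p-1)^2 * (q-1)^1 * (2-q)^1 * (r-1)^2 * (2-s)^2) + 75508 * ((a-1)^3 * (2-a)^2 * (p-1)^2 * (q-1)^1 * (2-q)^1 * (r-1)^2 * (s-1)^1 * (2-s)^1) + 18912 * ((a-1)^3 * (2-a)^2 * (p-1)^2 * (q-1)^1 * (2-q)^1 * (r-1)^2 * (s-1)^2) + 18696 * ((a-1)^3 * (2-a)^2 * (p-1)^2 * (q-1)^2 * (2-r)^2 * (2-s)^2) + 35880 * ((a-1)^3 * (2-a)^2 * (p-1)^2 * (q-1)^2 * (2-r)^2 * (s-1)^1 * (2-s)^1) + 11626 * ((a-1)^3 * (2-a)^2 * (p-1)^2 * (q-1)^2 * (2-r)^2 * (s-1)^2) + 35880 * ((a-1)^3 * (2-a)^2 * (p-1)^2 * (q-1)^2 * (r-1)^1 * (2-r)^1 * (2-s)^2) + 67444 * ((a-1)^3 * (2-a)^2 * (p-1)^2 * (q-1)^2 * (r-1)^1 * (2-r)^1 * (s-1)^1 * (2-s)^1) + 18912 * ((a-1)^3 * (2-a)^2 * (p-1)^2 * (q-1)^2 * (r-1)^1 * (2-r)^1 * (s-1)^2) + 11626 * ((a-1)^3 * (2-a)^2 * (p-1)^2 * (q-1)^2 * (r-1)^2 * (2-s)^2) + 18912 * ((a-1)^3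 * (2-a)^2 * (p-1)^2 * (q-1)^2 * (r-1)^2 * (s-1)^1 * (2-s)^1) + 11232 * ((a-1)^4 * (2-a)^1 * (2-p)^2 * (2-q)^2 * (2-r)^2 * (2-s)^2) + 26352 * ((a-1)^4 * (2-a)^1 * (2-p)^2 * (2-q)^2 * (2-r)^2 * (s-1)^1 * (2-s)^1) + 14160 * ((a-1)^4 * (2-a)^1 * (2-p)^2 * (2-q)^2 * (2-r)^2 * (s-1)^2) + 26352 * ((a-1)^4 * (2-a)^1 * (2-p)^2 * (2-q)^2 * (r-1)^1 * (2-r)^1 * (2-s)^2) + 59988 * ((a-1)^4 * (2-a)^1 * (2-p)^2 * (2-q)^2 * (r-1)^1 * (2-r)^1 * (s-1)^1 * (2-s)^1) + 31012 * ((a-1)^4 * (2-a)^1 * (2-p)^2 * (2-q)^2 * (r-1)^1 * (2-r)^1 * (s-1)^2) + 14160 * ((a-1)^4 * (2-a)^1 * (2-p)^2 * (2-q)^2 * (r-1)^2 * (2-s)^2) + 31012 * ((a-1)^4 * (2-a)^1 * (2-p)^2 * (2-q)^2 * (r-1)^2 * (s-1)^1 * (2-s)^1) + 15060 * ((a-1)^4 * (2-a)^1 * (2-p)^2 * (2-q)^2 * (r-1)^2 * (s-1)^2) + 26352 * ((a-1)^4 * (2-a)^1 * (2-p)^2 * (q-1)^1 * (2-q)^1 * (2-r)^2 * (2-s)^2) + 61752 * ((a-1)^4 * (2-a)^1 * (2-p)^2 * (q-1)^1 * (2-q)^1 * (2-r)^2 * (s-1)^1 * (2-s)^1) + 33480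 * ((a-1)^4 * (2-a)^1 * (2-p)^2 * (q-1)^1 * (2-q)^1 * (2-r)^2 * (s-1)^2) + 57828 * ((a-1)^4 * (2-a)^1 * (2-p)^2 * (q-1)^1 * (2-q)^1 * (r-1)^1 * (2-r)^1 * (2-s)^2) + 132010 * ((a-1)^4 * (2-a)^1 * (2-p)^2 * (q-1)^1 * (2-q)^1 * (r-1)^1 * (2-r)^1 * (s-1)^1 * (2-s)^1) + 68934 * ((a-1)^4 * (2-a)^1 * (2-p)^2 * (q-1)^1 * (2-q)^1 * (r-1)^1 * (2-r)^1 * (s-1)^2) + 27178 * ((a-1)^4 * (2-a)^1 * (2-p)^2 * (q-1)^1 * (2-q)^1 * (r-1)^2 * (2-s)^2) + 59806 * ((a-1)^4 * (2-a)^1 * (2-p)^2 * (q-1)^1 * (2-q)^1 * (r-1)^2 * (s-1)^1 * (2-s)^1) + 29044 * ((a-1)^4 * (2-a)^1 * (2-p)^2 * (q-1)^1 * (2-q)^1 * (r-1)^2 * (s-1)^2) + 14160 * ((a-1)^4 * (2-a)^1 * (2-p)^2 * (q-1)^2 * (2-r)^2 * (2-s)^2) + 33480 * ((a-1)^4 * (2-a)^1 * (2-p)^2 * (q-1)^2 * (2-r)^2 * (s-1)^1 * (2-s)^1) + 18360 * ((a-1)^4 * (2-a)^1 * (2-p)^2 * (q-1)^2 * (2-r)^2 * (s-1)^2) + 27178 * ((a-1)^4 * (2-a)^1 * (2-p)^2 * (q-1)^2 * (r-1)^1 * (2-r)^1 * (2-s)^2) + 63426 * ((a-1)^4 * (2-a)^1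 * (2-p)^2 * (q-1)^2 * (r-1)^1 * (2-r)^1 * (s-1)^1 * (2-s)^1) + 33624 * ((a-1)^4 * (2-a)^1 * (2-p)^2 * (q-1)^2 * (r-1)^1 * (2-r)^1 * (s-1)^2) + 8715 * ((a-1)^4 * (2-a)^1 * (2-p)^2 * (q-1)^2 * (r-1)^2 * (2-s)^2) + 20188 * ((a-1)^4 * (2-a)^1 * (2-p)^2 * (q-1)^2 * (r-1)^2 * (s-1)^1 * (2-s)^1) + 9681 * ((a-1)^4 * (2-a)^1 * (2-p)^2 * (q-1)^2 * (r-1)^2 * (s-1)^2) + 26352 * ((a-1)^4 * (2-a)^1 * (p-1)^1 * (2-p)^1 * (2-q)^2 * (2-r)^2 * (2-s)^2) + 57828 * ((a-1)^4 * (2-a)^1 * (p-1)^1 * (2-p)^1 * (2-q)^2 * (2-r)^2 * (s-1)^1 * (2-s)^1) + 27178 * ((a-1)^4 * (2-a)^1 * (p-1)^1 * (2-p)^1 * (2-q)^2 * (2-r)^2 * (s-1)^2) + 61752 * ((a-1)^4 * (2-a)^1 * (p-1)^1 * (2-p)^1 * (2-q)^2 * (r-1)^1 * (2-r)^1 * (2-s)^2) + 132010 * ((a-1)^4 * (2-a)^1 * (p-1)^1 * (2-p)^1 * (2-q)^2 * (r-1)^1 * (2-r)^1 * (s-1)^1 * (2-s)^1) + 59806 * ((a-1)^4 * (2-a)^1 * (p-1)^1 * (2-p)^1 * (2-q)^2 * (r-1)^1 * (2-r)^1 * (s-1)^2) + 33480 * ((a-1)^4 * (2-a)^1 * (p-1)^1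 * (2-p)^1 * (2-q)^2 * (r-1)^2 * (2-s)^2) + 68934 * ((a-1)^4 * (2-a)^1 * (p-1)^1 * (2-p)^1 * (2-q)^2 * (r-1)^2 * (s-1)^1 * (2-s)^1) + 29044 * ((a-1)^4 * (2-a)^1 * (p-1)^1 * (2-p)^1 * (2-q)^2 * (r-1)^2 * (s-1)^2) + 59988 * ((a-1)^4 * (2-a)^1 * (p-1)^1 * (2-p)^1 * (q-1)^1 * (2-q)^1 * (2-r)^2 * (2-s)^2) + 132010 * ((a-1)^4 * (2-a)^1 * (p-1)^1 * (2-p)^1 * (q-1)^1 * (2-q)^1 * (2-r)^2 * (s-1)^1 * (2-s)^1) + 63426 * ((a-1)^4 * (2-a)^1 * (p-1)^1 * (2-p)^1 * (q-1)^1 * (2-q)^1 * (2-r)^2 * (s-1)^2) + 132010 * ((a-1)^4 * (2-a)^1 * (p-1)^1 * (2-p)^1 * (q-1)^1 * (2-q)^1 * (r-1)^1 * (2-r)^1 * (2-s)^2) + 283226 * ((a-1)^4 * (2-a)^1 * (p-1)^1 * (2-p)^1 * (q-1)^1 * (2-q)^1 * (r-1)^1 * (2-r)^1 * (s-1)^1 * (2-s)^1) + 130312 * ((a-1)^4 * (2-a)^1 * (p-1)^1 * (2-p)^1 * (q-1)^1 * (2-q)^1 * (r-1)^1 * (2-r)^1 * (s-1)^2) + 63426 * ((a-1)^4 * (2-a)^1 * (p-1)^1 * (2-p)^1 * (q-1)^1 * (2-q)^1 * (r-1)^2 * (2-s)^2) + 130312 * ((a-1)^4 * (2-a)^1 *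 (p-1)^1 * (2-p)^1 * (q-1)^1 * (2-q)^1 * (r-1)^2 * (s-1)^1 * (2-s)^1) + 54066 * ((a-1)^4 * (2-a)^1 * (p-1)^1 * (2-p)^1 * (q-1)^1 * (2-q)^1 * (r-1)^2 * (s-1)^2) + 31012 * ((a-1)^4 * (2-a)^1 * (p-1)^1 * (2-p)^1 * (q-1)^2 * (2-r)^2 * (2-s)^2) + 68934 * ((a-1)^4 * (2-a)^1 * (p-1)^1 * (2-p)^1 * (q-1)^2 * (2-r)^2 * (s-1)^1 * (2-s)^1) + 33624 * ((a-1)^4 * (2-a)^1 * (p-1)^1 * (2-p)^1 * (q-1)^2 * (2-r)^2 * (s-1)^2) + 59806 * ((a-1)^4 * (2-a)^1 * (p-1)^1 * (2-p)^1 * (q-1)^2 * (r-1)^1 * (2-r)^1 * (2-s)^2) + 130312 * ((a-1)^4 * (2-a)^1 * (p-1)^1 * (2-p)^1 * (q-1)^2 * (r-1)^1 * (2-r)^1 * (s-1)^1 * (2-s)^1) + 60054 * ((a-1)^4 * (2-a)^1 * (p-1)^1 * (2-p)^1 * (q-1)^2 * (r-1)^1 * (2-r)^1 * (s-1)^2) + 20188 * ((a-1)^4 * (2-a)^1 * (p-1)^1 * (2-p)^1 * (q-1)^2 * (r-1)^2 * (2-s)^2) + 41862 * ((a-1)^4 * (2-a)^1 * (p-1)^1 * (2-p)^1 * (q-1)^2 * (r-1)^2 * (s-1)^1 * (2-s)^1) + 15264 * ((a-1)^4 * (2-a)^1 * (p-1)^1 * (2-p)^1 * (q-1)^2 * (r-1)^2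 * (s-1)^2) + 14160 * ((a-1)^4 * (2-a)^1 * (p-1)^2 * (2-q)^2 * (2-r)^2 * (2-s)^2) + 27178 * ((a-1)^4 * (2-a)^1 * (p-1)^2 * (2-q)^2 * (2-r)^2 * (s-1)^1 * (2-s)^1) + 8715 * ((a-1)^4 * (2-a)^1 * (p-1)^2 * (2-q)^2 * (2-r)^2 * (s-1)^2) + 33480 * ((a-1)^4 * (2-a)^1 * (p-1)^2 * (2-q)^2 * (r-1)^1 * (2-r)^1 * (2-s)^2) + 63426 * ((a-1)^4 * (2-a)^1 * (p-1)^2 * (2-q)^2 * (r-1)^1 * (2-r)^1 * (s-1)^1 * (2-s)^1) + 20188 * ((a-1)^4 * (2-a)^1 * (p-1)^2 * (2-q)^2 * (r-1)^1 * (2-r)^1 * (s-1)^2) + 18360 * ((a-1)^4 * (2-a)^1 * (p-1)^2 * (2-q)^2 * (r-1)^2 * (2-s)^2) + 33624 * ((a-1)^4 * (2-a)^1 * (p-1)^2 * (2-q)^2 * (r-1)^2 * (s-1)^1 * (2-s)^1) + 9681 * ((a-1)^4 * (2-a)^1 * (p-1)^2 * (2-q)^2 * (r-1)^2 * (s-1)^2) + 31012 * ((a-1)^4 * (2-a)^1 * (p-1)^2 * (q-1)^1 * (2-q)^1 * (2-r)^2 * (2-s)^2) + 59806 * ((a-1)^4 * (2-a)^1 * (p-1)^2 * (q-1)^1 * (2-q)^1 * (2-r)^2 * (s-1)^1 * (2-s)^1) + 20188 * ((a-1)^4 * (2-a)^1 * (p-1)^2 * (q-1)^1 * (2-q)^1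 * (2-r)^2 * (s-1)^2) + 68934 * ((a-1)^4 * (2-a)^1 * (p-1)^2 * (q-1)^1 * (2-q)^1 * (r-1)^1 * (2-r)^1 * (2-s)^2) + 130312 * ((a-1)^4 * (2-a)^1 * (p-1)^2 * (q-1)^1 * (2-q)^1 * (r-1)^1 * (2-r)^1 * (s-1)^1 * (2-s)^1) + 41862 * ((a-1)^4 * (2-a)^1 * (p-1)^2 * (q-1)^1 * (2-q)^1 * (r-1)^1 * (2-r)^1 * (s-1)^2) + 33624 * ((a-1)^4 * (2-a)^1 * (p-1)^2 * (q-1)^1 * (2-q)^1 * (r-1)^2 * (2-s)^2) + 60054 * ((a-1)^4 * (2-a)^1 * (p-1)^2 * (q-1)^1 * (2-q)^1 * (r-1)^2 * (s-1)^1 * (2-s)^1) + 15264 * ((a-1)^4 * (2-a)^1 * (p-1)^2 * (q-1)^1 * (2-q)^1 * (r-1)^2 * (s-1)^2) + 15060 * ((a-1)^4 * (2-a)^1 * (p-1)^2 * (q-1)^2 * (2-r)^2 * (2-s)^2) + 29044 * ((a-1)^4 * (2-a)^1 * (p-1)^2 * (q-1)^2 * (2-r)^2 * (s-1)^1 * (2-s)^1) + 9681 * ((a-1)^4 * (2-a)^1 * (p-1)^2 * (q-1)^2 * (2-r)^2 * (s-1)^2) + 29044 * ((a-1)^4 * (2-a)^1 * (p-1)^2 * (q-1)^2 * (r-1)^1 * (2-r)^1 * (2-s)^2) + 54066 * ((a-1)^4 * (2-a)^1 * (p-1)^2 * (q-1)^2 * (r-1)^1 * (2-r)^1 * (s-1)^1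 * (2-s)^1) + 15264 * ((a-1)^4 * (2-a)^1 * (p-1)^2 * (q-1)^2 * (r-1)^1 * (2-r)^1 * (s-1)^2) + 9681 * ((a-1)^4 * (2-a)^1 * (p-1)^2 * (q-1)^2 * (r-1)^2 * (2-s)^2) + 15264 * ((a-1)^4 * (2-a)^1 * (p-1)^2 * (q-1)^2 * (r-1)^2 * (s-1)^1 * (2-s)^1) + 3240 * ((a-1)^5 * (2-p)^2 * (2-q)^2 * (2-r)^2 * (2-s)^2) + 7668 * ((a-1)^5 * (2-p)^2 * (2-q)^2 * (2-r)^2 * (s-1)^1 * (2-s)^1) + 4140 * ((a-1)^5 * (2-p)^2 * (2-q)^2 * (2-r)^2 * (s-1)^2) + 7668 * ((a-1)^5 * (2-p)^2 * (2-q)^2 * (r-1)^1 * (2-r)^1 * (2-s)^2) + 17532 * ((a-1)^5 * (2-p)^2 * (2-q)^2 * (r-1)^1 * (2-r)^1 * (s-1)^1 * (2-s)^1) + 9096 * ((a-1)^5 * (2-p)^2 * (2-q)^2 * (r-1)^1 * (2-r)^1 * (s-1)^2) + 4140 * ((a-1)^5 * (2-p)^2 * (2-q)^2 * (r-1)^2 * (2-s)^2) + 9096 * ((a-1)^5 * (2-p)^2 * (2-q)^2 * (r-1)^2 * (s-1)^1 * (2-s)^1) + 4444 * ((a-1)^5 * (2-p)^2 * (2-q)^2 * (r-1)^2 * (s-1)^2) + 7668 * ((a-1)^5 * (2-p)^2 * (q-1)^1 * (2-q)^1 * (2-r)^2 * (2-s)^2) + 18018 * ((a-1)^5 * (2-p)^2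 * (q-1)^1 * (2-q)^1 * (2-r)^2 * (s-1)^1 * (2-s)^1) + 9774 * ((a-1)^5 * (2-p)^2 * (q-1)^1 * (2-q)^1 * (2-r)^2 * (s-1)^2) + 17046 * ((a-1)^5 * (2-p)^2 * (q-1)^1 * (2-q)^1 * (r-1)^1 * (2-r)^1 * (2-s)^2) + 38814 * ((a-1)^5 * (2-p)^2 * (q-1)^1 * (2-q)^1 * (r-1)^1 * (2-r)^1 * (s-1)^1 * (2-s)^1) + 20232 * ((a-1)^5 * (2-p)^2 * (q-1)^1 * (2-q)^1 * (r-1)^1 * (2-r)^1 * (s-1)^2) + 8124 * ((a-1)^5 * (2-p)^2 * (q-1)^1 * (2-q)^1 * (r-1)^2 * (2-s)^2) + 17776 * ((a-1)^5 * (2-p)^2 * (q-1)^1 * (2-q)^1 * (r-1)^2 * (s-1)^1 * (2-s)^1) + 8628 * ((a-1)^5 * (2-p)^2 * (q-1)^1 * (2-q)^1 * (r-1)^2 * (s-1)^2) + 4140 * ((a-1)^5 * (2-p)^2 * (q-1)^2 * (2-r)^2 * (2-s)^2) + 9774 * ((a-1)^5 * (2-p)^2 * (q-1)^2 * (2-r)^2 * (s-1)^1 * (2-s)^1) + 5346 * ((a-1)^5 * (2-p)^2 * (q-1)^2 * (2-r)^2 * (s-1)^2) + 8124 * ((a-1)^5 * (2-p)^2 * (q-1)^2 * (r-1)^1 * (2-r)^1 * (2-s)^2) + 18774 * ((a-1)^5 * (2-p)^2 * (q-1)^2 * (r-1)^1 * (2-r)^1 * (s-1)^1 * (2-s)^1)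 + 9882 * ((a-1)^5 * (2-p)^2 * (q-1)^2 * (r-1)^1 * (2-r)^1 * (s-1)^2) + 2743 * ((a-1)^5 * (2-p)^2 * (q-1)^2 * (r-1)^2 * (2-s)^2) + 6198 * ((a-1)^5 * (2-p)^2 * (q-1)^2 * (r-1)^2 * (s-1)^1 * (2-s)^1) + 2943 * ((a-1)^5 * (2-p)^2 * (q-1)^2 * (r-1)^2 * (s-1)^2) + 7668 * ((a-1)^5 * (p-1)^1 * (2-p)^1 * (2-q)^2 * (2-r)^2 * (2-s)^2) + 17046 * ((a-1)^5 * (p-1)^1 * (2-p)^1 * (2-q)^2 * (2-r)^2 * (s-1)^1 * (2-s)^1) + 8124 * ((a-1)^5 * (p-1)^1 * (2-p)^1 * (2-q)^2 * (2-r)^2 * (s-1)^2) + 18018 * ((a-1)^5 * (p-1)^1 * (2-p)^1 * (2-q)^2 * (r-1)^1 * (2-r)^1 * (2-s)^2) + 38814 * ((a-1)^5 * (p-1)^1 * (2-p)^1 * (2-q)^2 * (r-1)^1 * (2-r)^1 * (s-1)^1 * (2-s)^1) + 17776 * ((a-1)^5 * (p-1)^1 * (2-p)^1 * (2-q)^2 * (r-1)^1 * (2-r)^1 * (s-1)^2) + 9774 * ((a-1)^5 * (p-1)^1 * (2-p)^1 * (2-q)^2 * (r-1)^2 * (2-s)^2) + 20232 * ((a-1)^5 * (p-1)^1 * (2-p)^1 * (2-q)^2 * (r-1)^2 * (s-1)^1 * (2-s)^1) + 8628 * ((a-1)^5 * (p-1)^1 * (2-p)^1 * (2-q)^2 *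 (r-1)^2 * (s-1)^2) + 17532 * ((a-1)^5 * (p-1)^1 * (2-p)^1 * (q-1)^1 * (2-q)^1 * (2-r)^2 * (2-s)^2) + 38814 * ((a-1)^5 * (p-1)^1 * (2-p)^1 * (q-1)^1 * (2-q)^1 * (2-r)^2 * (s-1)^1 * (2-s)^1) + 18774 * ((a-1)^5 * (p-1)^1 * (2-p)^1 * (q-1)^1 * (2-q)^1 * (2-r)^2 * (s-1)^2) + 38814 * ((a-1)^5 * (p-1)^1 * (2-p)^1 * (q-1)^1 * (2-q)^1 * (r-1)^1 * (2-r)^1 * (2-s)^2) + 83254 * ((a-1)^5 * (p-1)^1 * (2-p)^1 * (q-1)^1 * (2-q)^1 * (r-1)^1 * (2-r)^1 * (s-1)^1 * (2-s)^1) + 38400 * ((a-1)^5 * (p-1)^1 * (2-p)^1 * (q-1)^1 * (2-q)^1 * (r-1)^1 * (2-r)^1 * (s-1)^2) + 18774 * ((a-1)^5 * (p-1)^1 * (2-p)^1 * (q-1)^1 * (2-q)^1 * (r-1)^2 * (2-s)^2) + 38400 * ((a-1)^5 * (p-1)^1 * (2-p)^1 * (q-1)^1 * (2-q)^1 * (r-1)^2 * (s-1)^1 * (2-s)^1) + 15966 * ((a-1)^5 * (p-1)^1 * (2-p)^1 * (q-1)^1 * (2-q)^1 * (r-1)^2 * (s-1)^2) + 9096 * ((a-1)^5 * (p-1)^1 * (2-p)^1 * (q-1)^2 * (2-r)^2 * (2-s)^2) + 20232 * ((a-1)^5 * (p-1)^1 * (2-p)^1 * (q-1)^2 * (2-r)^2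 * (s-1)^1 * (2-s)^1) + 9882 * ((a-1)^5 * (p-1)^1 * (2-p)^1 * (q-1)^2 * (2-r)^2 * (s-1)^2) + 17776 * ((a-1)^5 * (p-1)^1 * (2-p)^1 * (q-1)^2 * (r-1)^1 * (2-r)^1 * (2-s)^2) + 38400 * ((a-1)^5 * (p-1)^1 * (2-p)^1 * (q-1)^2 * (r-1)^1 * (2-r)^1 * (s-1)^1 * (2-s)^1) + 17604 * ((a-1)^5 * (p-1)^1 * (2-p)^1 * (q-1)^2 * (r-1)^1 * (2-r)^1 * (s-1)^2) + 6198 * ((a-1)^5 * (p-1)^1 * (2-p)^1 * (q-1)^2 * (r-1)^2 * (2-s)^2) + 12564 * ((a-1)^5 * (p-1)^1 * (2-p)^1 * (q-1)^2 * (r-1)^2 * (s-1)^1 * (2-s)^1) + 4536 * ((a-1)^5 * (p-1)^1 * (2-p)^1 * (q-1)^2 * (r-1)^2 * (s-1)^2) + 4140 * ((a-1)^5 * (p-1)^2 * (2-q)^2 * (2-r)^2 * (2-s)^2) + 8124 * ((a-1)^5 * (p-1)^2 * (2-q)^2 * (2-r)^2 * (s-1)^1 * (2-s)^1) + 2743 * ((a-1)^5 * (p-1)^2 * (2-q)^2 * (2-r)^2 * (s-1)^2) + 9774 * ((a-1)^5 * (p-1)^2 * (2-q)^2 * (r-1)^1 * (2-r)^1 * (2-s)^2) + 18774 * ((a-1)^5 * (p-1)^2 * (2-q)^2 * (r-1)^1 * (2-r)^1 * (s-1)^1 * (2-s)^1) + 6198 * ((a-1)^5 * (p-1)^2 *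 (2-q)^2 * (r-1)^1 * (2-r)^1 * (s-1)^2) + 5346 * ((a-1)^5 * (p-1)^2 * (2-q)^2 * (r-1)^2 * (2-s)^2) + 9882 * ((a-1)^5 * (p-1)^2 * (2-q)^2 * (r-1)^2 * (s-1)^1 * (2-s)^1) + 2943 * ((a-1)^5 * (p-1)^2 * (2-q)^2 * (r-1)^2 * (s-1)^2) + 9096 * ((a-1)^5 * (p-1)^2 * (q-1)^1 * (2-q)^1 * (2-r)^2 * (2-s)^2) + 17776 * ((a-1)^5 * (p-1)^2 * (q-1)^1 * (2-q)^1 * (2-r)^2 * (s-1)^1 * (2-s)^1) + 6198 * ((a-1)^5 * (p-1)^2 * (q-1)^1 * (2-q)^1 * (2-r)^2 * (s-1)^2) + 20232 * ((a-1)^5 * (p-1)^2 * (q-1)^1 * (2-q)^1 * (r-1)^1 * (2-r)^1 * (2-s)^2) + 38400 * ((a-1)^5 * (p-1)^2 * (q-1)^1 * (2-q)^1 * (r-1)^1 * (2-r)^1 * (s-1)^1 * (2-s)^1) + 12564 * ((a-1)^5 * (p-1)^2 * (q-1)^1 * (2-q)^1 * (r-1)^1 * (2-r)^1 * (s-1)^2) + 9882 * ((a-1)^5 * (p-1)^2 * (q-1)^1 * (2-q)^1 * (r-1)^2 * (2-s)^2) + 17604 * ((a-1)^5 * (p-1)^2 * (q-1)^1 * (2-q)^1 * (r-1)^2 * (s-1)^1 * (2-s)^1) + 4536 * ((a-1)^5 * (p-1)^2 * (q-1)^1 * (2-q)^1 * (r-1)^2 * (s-1)^2) + 4444 * ((a-1)^5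 * (p-1)^2 * (q-1)^2 * (2-r)^2 * (2-s)^2) + 8628 * ((a-1)^5 * (p-1)^2 * (q-1)^2 * (2-r)^2 * (s-1)^1 * (2-s)^1) + 2943 * ((a-1)^5 * (p-1)^2 * (q-1)^2 * (2-r)^2 * (s-1)^2) + 8628 * ((a-1)^5 * (p-1)^2 * (q-1)^2 * (r-1)^1 * (2-r)^1 * (2-s)^2) + 15966 * ((a-1)^5 * (p-1)^2 * (q-1)^2 * (r-1)^1 * (2-r)^1 * (s-1)^1 * (2-s)^1) + 4536 * ((a-1)^5 * (p-1)^2 * (q-1)^2 * (r-1)^1 * (2-r)^1 * (s-1)^2) + 2943 * ((a-1)^5 * (p-1)^2 * (q-1)^2 * (r-1)^2 * (2-s)^2) + 4536 * ((a-1)^5 * (p-1)^2 * (q-1)^2 * (r-1)^2 * (s-1)^1 * (2-s)^1)) by ring.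
    pos_tac. }
  apply Rmult_le_reg_l with 1; [lra| rewrite Rmult_0_r; exact H].
Qed.

Lemma low_poly (a p q r s : R) : 1<=a<=2 -> 1<=p<=2 -> 1<=q<=2 -> 1<=r<=2 -> 1<=s<=2 ->
  0 <= (a+1)^2*(p*q + r*s + a*(p*s+q*r) + 2*(1 - a^2))^2 - 4*(2-a)^2*(2*a*p*r + a^2 + p^2 + r^2 - 1)*(2*a*q*s + a^2 + q^2 + s^2 - 1).
Proof.
  intros [Ha1 Ha2] [Hp1 Hp2] [Hq1 Hq2] [Hr1 Hr2] [Hs1 Hs2].
  assert (H : 0 <= 1 * ((a+1)^2*(p*q + r*s + a*(p*s+q*r) + 2*(1 - a^2))^2 - 4*(2-a)^2*(2*a*p*r + a^2 + p^2 + r^2 - 1)*(2*a*q*s + a^2 + q^2 + s^2 - 1))).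
  { replace (1 * ((a+1)^2*(p*q + r*s + a*(p*s+q*r) + 2*(1 - a^2))^2 - 4*(2-a)^2*(2*a*p*r + a^2 + p^2 + r^2 - 1)*(2*a*q*s + a^2 + q^2 + s^2 - 1))) with (96 * ((a-1)^1 * (2-a)^4 * (2-p)^2 * (2-q)^2 * (2-r)^2 * (s-1)^1 * (2-s)^1) + 144 * ((a-1)^1 * (2-a)^4 * (2-p)^2 * (2-q)^2 * (2-r)^2 * (s-1)^2) + 96 * ((a-1)^1 * (2-a)^4 * (2-p)^2 * (2-q)^2 * (r-1)^1 * (2-r)^1 * (2-s)^2) + 528 * ((a-1)^1 * (2-a)^4 * (2-p)^2 * (2-q)^2 * (r-1)^1 * (2-r)^1 * (s-1)^1 * (2-s)^1) + 576 * ((a-1)^1 * (2-a)^4 * (2-p)^2 * (2-q)^2 * (r-1)^1 * (2-r)^1 * (s-1)^2) + 144 * ((a-1)^1 * (2-a)^4 * (2-p)^2 * (2-q)^2 * (r-1)^2 * (2-s)^2) + 576 * ((a-1)^1 * (2-a)^4 * (2-p)^2 * (2-q)^2 * (r-1)^2 * (s-1)^1 * (2-s)^1) + 540 * ((a-1)^1 * (2-a)^4 * (2-p)^2 * (2-q)^2 * (r-1)^2 * (s-1)^2) + 96 * ((a-1)^1 * (2-a)^4 * (2-p)^2 * (q-1)^1 * (2-q)^1 * (2-r)^2 * (2-s)^2) + 448 * ((a-1)^1 * (2-a)^4 * (2-p)^2 * (q-1)^1 * (2-q)^1 * (2-r)^2 * (s-1)^1 * (2-s)^1) + 448 * ((a-1)^1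 * (2-a)^4 * (2-p)^2 * (q-1)^1 * (2-q)^1 * (2-r)^2 * (s-1)^2) + 560 * ((a-1)^1 * (2-a)^4 * (2-p)^2 * (q-1)^1 * (2-q)^1 * (r-1)^1 * (2-r)^1 * (2-s)^2) + 2000 * ((a-1)^1 * (2-a)^4 * (2-p)^2 * (q-1)^1 * (2-q)^1 * (r-1)^1 * (2-r)^1 * (s-1)^1 * (2-s)^1) + 1728 * ((a-1)^1 * (2-a)^4 * (2-p)^2 * (q-1)^1 * (2-q)^1 * (r-1)^1 * (2-r)^1 * (s-1)^2) + 624 * ((a-1)^1 * (2-a)^4 * (2-p)^2 * (q-1)^1 * (2-q)^1 * (r-1)^2 * (2-s)^2) + 1992 * ((a-1)^1 * (2-a)^4 * (2-p)^2 * (q-1)^1 * (2-q)^1 * (r-1)^2 * (s-1)^1 * (2-s)^1) + 1584 * ((a-1)^1 * (2-a)^4 * (2-p)^2 * (q-1)^1 * (2-q)^1 * (r-1)^2 * (s-1)^2) + 144 * ((a-1)^1 * (2-a)^4 * (2-p)^2 * (q-1)^2 * (2-r)^2 * (2-s)^2) + 448 * ((a-1)^1 * (2-a)^4 * (2-p)^2 * (q-1)^2 * (2-r)^2 * (s-1)^1 * (2-s)^1) + 352 * ((a-1)^1 * (2-a)^4 * (2-p)^2 * (q-1)^2 * (2-r)^2 * (s-1)^2) + 624 * ((a-1)^1 * (2-a)^4 * (2-p)^2 * (q-1)^2 * (r-1)^1 * (2-r)^1 * (2-s)^2) + 1792 * ((a-1)^1 * (2-a)^4 * (2-p)^2 *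 (q-1)^2 * (r-1)^1 * (2-r)^1 * (s-1)^1 * (2-s)^1) + 1312 * ((a-1)^1 * (2-a)^4 * (2-p)^2 * (q-1)^2 * (r-1)^1 * (2-r)^1 * (s-1)^2) + 612 * ((a-1)^1 * (2-a)^4 * (2-p)^2 * (q-1)^2 * (r-1)^2 * (2-s)^2) + 1680 * ((a-1)^1 * (2-a)^4 * (2-p)^2 * (q-1)^2 * (r-1)^2 * (s-1)^1 * (2-s)^1) + 1176 * ((a-1)^1 * (2-a)^4 * (2-p)^2 * (q-1)^2 * (r-1)^2 * (s-1)^2) + 96 * ((a-1)^1 * (2-a)^4 * (p-1)^1 * (2-p)^1 * (2-q)^2 * (2-r)^2 * (2-s)^2) + 560 * ((a-1)^1 * (2-a)^4 * (p-1)^1 * (2-p)^1 * (2-q)^2 * (2-r)^2 * (s-1)^1 * (2-s)^1) + 624 * ((a-1)^1 * (2-a)^4 * (p-1)^1 * (2-p)^1 * (2-q)^2 * (2-r)^2 * (s-1)^2) + 448 * ((a-1)^1 * (2-a)^4 * (p-1)^1 * (2-p)^1 * (2-q)^2 * (r-1)^1 * (2-r)^1 * (2-s)^2) + 2000 * ((a-1)^1 * (2-a)^4 * (p-1)^1 * (2-p)^1 * (2-q)^2 * (r-1)^1 * (2-r)^1 * (s-1)^1 * (2-s)^1) + 1992 * ((a-1)^1 * (2-a)^4 * (p-1)^1 * (2-p)^1 * (2-q)^2 * (r-1)^1 * (2-r)^1 * (s-1)^2) + 448 * ((a-1)^1 * (2-a)^4 * (p-1)^1 * (2-p)^1 * (2-q)^2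 * (r-1)^2 * (2-s)^2) + 1728 * ((a-1)^1 * (2-a)^4 * (p-1)^1 * (2-p)^1 * (2-q)^2 * (r-1)^2 * (s-1)^1 * (2-s)^1) + 1584 * ((a-1)^1 * (2-a)^4 * (p-1)^1 * (2-p)^1 * (2-q)^2 * (r-1)^2 * (s-1)^2) + 528 * ((a-1)^1 * (2-a)^4 * (p-1)^1 * (2-p)^1 * (q-1)^1 * (2-q)^1 * (2-r)^2 * (2-s)^2) + 2000 * ((a-1)^1 * (2-a)^4 * (p-1)^1 * (2-p)^1 * (q-1)^1 * (2-q)^1 * (2-r)^2 * (s-1)^1 * (2-s)^1) + 1792 * ((a-1)^1 * (2-a)^4 * (p-1)^1 * (2-p)^1 * (q-1)^1 * (2-q)^1 * (2-r)^2 * (s-1)^2) + 2000 * ((a-1)^1 * (2-a)^4 * (p-1)^1 * (2-p)^1 * (q-1)^1 * (2-q)^1 * (r-1)^1 * (2-r)^1 * (2-s)^2) + 6816 * ((a-1)^1 * (2-a)^4 * (p-1)^1 * (2-p)^1 * (q-1)^1 * (2-q)^1 * (r-1)^1 * (2-r)^1 * (s-1)^1 * (2-s)^1) + 5696 * ((a-1)^1 * (2-a)^4 * (p-1)^1 * (2-p)^1 * (q-1)^1 * (2-q)^1 * (r-1)^1 * (2-r)^1 * (s-1)^2) + 1792 * ((a-1)^1 * (2-a)^4 * (p-1)^1 * (2-p)^1 * (q-1)^1 * (2-q)^1 * (r-1)^2 * (2-s)^2) + 5696 * ((a-1)^1 * (2-a)^4 * (p-1)^1 * (2-p)^1 * (q-1)^1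 * (2-q)^1 * (r-1)^2 * (s-1)^1 * (2-s)^1) + 4512 * ((a-1)^1 * (2-a)^4 * (p-1)^1 * (2-p)^1 * (q-1)^1 * (2-q)^1 * (r-1)^2 * (s-1)^2) + 576 * ((a-1)^1 * (2-a)^4 * (p-1)^1 * (2-p)^1 * (q-1)^2 * (2-r)^2 * (2-s)^2) + 1728 * ((a-1)^1 * (2-a)^4 * (p-1)^1 * (2-p)^1 * (q-1)^2 * (2-r)^2 * (s-1)^1 * (2-s)^1) + 1312 * ((a-1)^1 * (2-a)^4 * (p-1)^1 * (2-p)^1 * (q-1)^2 * (2-r)^2 * (s-1)^2) + 1992 * ((a-1)^1 * (2-a)^4 * (p-1)^1 * (2-p)^1 * (q-1)^2 * (r-1)^1 * (2-r)^1 * (2-s)^2) + 5696 * ((a-1)^1 * (2-a)^4 * (p-1)^1 * (2-p)^1 * (q-1)^2 * (r-1)^1 * (2-r)^1 * (s-1)^1 * (2-s)^1) + 4144 * ((a-1)^1 * (2-a)^4 * (p-1)^1 * (2-p)^1 * (q-1)^2 * (r-1)^1 * (2-r)^1 * (s-1)^2) + 1680 * ((a-1)^1 * (2-a)^4 * (p-1)^1 * (2-p)^1 * (q-1)^2 * (r-1)^2 * (2-s)^2) + 4640 * ((a-1)^1 * (2-a)^4 * (p-1)^1 * (2-p)^1 * (q-1)^2 * (r-1)^2 * (s-1)^1 * (2-s)^1) + 3264 * ((a-1)^1 * (2-a)^4 * (p-1)^1 * (2-p)^1 * (q-1)^2 * (r-1)^2 * (s-1)^2) + 144 * ((a-1)^1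 * (2-a)^4 * (p-1)^2 * (2-q)^2 * (2-r)^2 * (2-s)^2) + 624 * ((a-1)^1 * (2-a)^4 * (p-1)^2 * (2-q)^2 * (2-r)^2 * (s-1)^1 * (2-s)^1) + 612 * ((a-1)^1 * (2-a)^4 * (p-1)^2 * (2-q)^2 * (2-r)^2 * (s-1)^2) + 448 * ((a-1)^1 * (2-a)^4 * (p-1)^2 * (2-q)^2 * (r-1)^1 * (2-r)^1 * (2-s)^2) + 1792 * ((a-1)^1 * (2-a)^4 * (p-1)^2 * (2-q)^2 * (r-1)^1 * (2-r)^1 * (s-1)^1 * (2-s)^1) + 1680 * ((a-1)^1 * (2-a)^4 * (p-1)^2 * (2-q)^2 * (r-1)^1 * (2-r)^1 * (s-1)^2) + 352 * ((a-1)^1 * (2-a)^4 * (p-1)^2 * (2-q)^2 * (r-1)^2 * (2-s)^2) + 1312 * ((a-1)^1 * (2-a)^4 * (p-1)^2 * (2-q)^2 * (r-1)^2 * (s-1)^1 * (2-s)^1) + 1176 * ((a-1)^1 * (2-a)^4 * (p-1)^2 * (2-q)^2 * (r-1)^2 * (s-1)^2) + 576 * ((a-1)^1 * (2-a)^4 * (p-1)^2 * (q-1)^1 * (2-q)^1 * (2-r)^2 * (2-s)^2) + 1992 * ((a-1)^1 * (2-a)^4 * (p-1)^2 * (q-1)^1 * (2-q)^1 * (2-r)^2 * (s-1)^1 * (2-s)^1) + 1680 * ((a-1)^1 * (2-a)^4 * (p-1)^2 * (q-1)^1 * (2-q)^1 * (2-r)^2 * (s-1)^2) + 1728 * ((a-1)^1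 * (2-a)^4 * (p-1)^2 * (q-1)^1 * (2-q)^1 * (r-1)^1 * (2-r)^1 * (2-s)^2) + 5696 * ((a-1)^1 * (2-a)^4 * (p-1)^2 * (q-1)^1 * (2-q)^1 * (r-1)^1 * (2-r)^1 * (s-1)^1 * (2-s)^1) + 4640 * ((a-1)^1 * (2-a)^4 * (p-1)^2 * (q-1)^1 * (2-q)^1 * (r-1)^1 * (2-r)^1 * (s-1)^2) + 1312 * ((a-1)^1 * (2-a)^4 * (p-1)^2 * (q-1)^1 * (2-q)^1 * (r-1)^2 * (2-s)^2) + 4144 * ((a-1)^1 * (2-a)^4 * (p-1)^2 * (q-1)^1 * (2-q)^1 * (r-1)^2 * (s-1)^1 * (2-s)^1) + 3264 * ((a-1)^1 * (2-a)^4 * (p-1)^2 * (q-1)^1 * (2-q)^1 * (r-1)^2 * (s-1)^2) + 540 * ((a-1)^1 * (2-a)^4 * (p-1)^2 * (q-1)^2 * (2-r)^2 * (2-s)^2) + 1584 * ((a-1)^1 * (2-a)^4 * (p-1)^2 * (q-1)^2 * (2-r)^2 * (s-1)^1 * (2-s)^1) + 1176 * ((a-1)^1 * (2-a)^4 * (p-1)^2 * (q-1)^2 * (2-r)^2 * (s-1)^2) + 1584 * ((a-1)^1 * (2-a)^4 * (p-1)^2 * (q-1)^2 * (r-1)^1 * (2-r)^1 * (2-s)^2) + 4512 * ((a-1)^1 * (2-a)^4 * (p-1)^2 * (q-1)^2 * (r-1)^1 * (2-r)^1 * (s-1)^1 * (2-s)^1) + 3264 * ((a-1)^1 * (2-a)^4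 * (p-1)^2 * (q-1)^2 * (r-1)^1 * (2-r)^1 * (s-1)^2) + 1176 * ((a-1)^1 * (2-a)^4 * (p-1)^2 * (q-1)^2 * (r-1)^2 * (2-s)^2) + 3264 * ((a-1)^1 * (2-a)^4 * (p-1)^2 * (q-1)^2 * (r-1)^2 * (s-1)^1 * (2-s)^1) + 2304 * ((a-1)^1 * (2-a)^4 * (p-1)^2 * (q-1)^2 * (r-1)^2 * (s-1)^2) + 432 * ((a-1)^2 * (2-a)^3 * (2-p)^2 * (2-q)^2 * (2-r)^2 * (s-1)^1 * (2-s)^1) + 660 * ((a-1)^2 * (2-a)^3 * (2-p)^2 * (2-q)^2 * (2-r)^2 * (s-1)^2) + 432 * ((a-1)^2 * (2-a)^3 * (2-p)^2 * (2-q)^2 * (r-1)^1 * (2-r)^1 * (2-s)^2) + 2376 * ((a-1)^2 * (2-a)^3 * (2-p)^2 * (2-q)^2 * (r-1)^1 * (2-r)^1 * (s-1)^1 * (2-s)^1) + 2604 * ((a-1)^2 * (2-a)^3 * (2-p)^2 * (2-q)^2 * (r-1)^1 * (2-r)^1 * (s-1)^2) + 660 * ((a-1)^2 * (2-a)^3 * (2-p)^2 * (2-q)^2 * (r-1)^2 * (2-s)^2) + 2604 * ((a-1)^2 * (2-a)^3 * (2-p)^2 * (2-q)^2 * (r-1)^2 * (s-1)^1 * (2-s)^1) + 2421 * ((a-1)^2 * (2-a)^3 * (2-p)^2 * (2-q)^2 * (r-1)^2 * (s-1)^2) + 432 * ((a-1)^2 * (2-a)^3 * (2-p)^2 * (q-1)^1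 * (2-q)^1 * (2-r)^2 * (2-s)^2) + 2088 * ((a-1)^2 * (2-a)^3 * (2-p)^2 * (q-1)^1 * (2-q)^1 * (2-r)^2 * (s-1)^1 * (2-s)^1) + 2112 * ((a-1)^2 * (2-a)^3 * (2-p)^2 * (q-1)^1 * (2-q)^1 * (2-r)^2 * (s-1)^2) + 2520 * ((a-1)^2 * (2-a)^3 * (2-p)^2 * (q-1)^1 * (2-q)^1 * (r-1)^1 * (2-r)^1 * (2-s)^2) + 9200 * ((a-1)^2 * (2-a)^3 * (2-p)^2 * (q-1)^1 * (2-q)^1 * (r-1)^1 * (2-r)^1 * (s-1)^1 * (2-s)^1) + 8000 * ((a-1)^2 * (2-a)^3 * (2-p)^2 * (q-1)^1 * (2-q)^1 * (r-1)^1 * (2-r)^1 * (s-1)^2) + 2836 * ((a-1)^2 * (2-a)^3 * (2-p)^2 * (q-1)^1 * (2-q)^1 * (r-1)^2 * (2-s)^2) + 9130 * ((a-1)^2 * (2-a)^3 * (2-p)^2 * (q-1)^1 * (2-q)^1 * (r-1)^2 * (s-1)^1 * (2-s)^1) + 7248 * ((a-1)^2 * (2-a)^3 * (2-p)^2 * (q-1)^1 * (2-q)^1 * (r-1)^2 * (s-1)^2) + 660 * ((a-1)^2 * (2-a)^3 * (2-p)^2 * (q-1)^2 * (2-r)^2 * (2-s)^2) + 2112 * ((a-1)^2 * (2-a)^3 * (2-p)^2 * (q-1)^2 * (2-r)^2 * (s-1)^1 * (2-s)^1) + 1680 * ((a-1)^2 * (2-a)^3 * (2-p)^2 * (q-1)^2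 * (2-r)^2 * (s-1)^2) + 2836 * ((a-1)^2 * (2-a)^3 * (2-p)^2 * (q-1)^2 * (r-1)^1 * (2-r)^1 * (2-s)^2) + 8320 * ((a-1)^2 * (2-a)^3 * (2-p)^2 * (q-1)^2 * (r-1)^1 * (2-r)^1 * (s-1)^1 * (2-s)^1) + 6144 * ((a-1)^2 * (2-a)^3 * (2-p)^2 * (q-1)^2 * (r-1)^1 * (2-r)^1 * (s-1)^2) + 2785 * ((a-1)^2 * (2-a)^3 * (2-p)^2 * (q-1)^2 * (r-1)^2 * (2-s)^2) + 7744 * ((a-1)^2 * (2-a)^3 * (2-p)^2 * (q-1)^2 * (r-1)^2 * (s-1)^1 * (2-s)^1) + 5436 * ((a-1)^2 * (2-a)^3 * (2-p)^2 * (q-1)^2 * (r-1)^2 * (s-1)^2) + 432 * ((a-1)^2 * (2-a)^3 * (p-1)^1 * (2-p)^1 * (2-q)^2 * (2-r)^2 * (2-s)^2) + 2520 * ((a-1)^2 * (2-a)^3 * (p-1)^1 * (2-p)^1 * (2-q)^2 * (2-r)^2 * (s-1)^1 * (2-s)^1) + 2836 * ((a-1)^2 * (2-a)^3 * (p-1)^1 * (2-p)^1 * (2-q)^2 * (2-r)^2 * (s-1)^2) + 2088 * ((a-1)^2 * (2-a)^3 * (p-1)^1 * (2-p)^1 * (2-q)^2 * (r-1)^1 * (2-r)^1 * (2-s)^2) + 9200 * ((a-1)^2 * (2-a)^3 * (p-1)^1 * (2-p)^1 * (2-q)^2 * (r-1)^1 * (2-r)^1 * (s-1)^1 * (2-s)^1)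 + 9130 * ((a-1)^2 * (2-a)^3 * (p-1)^1 * (2-p)^1 * (2-q)^2 * (r-1)^1 * (2-r)^1 * (s-1)^2) + 2112 * ((a-1)^2 * (2-a)^3 * (p-1)^1 * (2-p)^1 * (2-q)^2 * (r-1)^2 * (2-s)^2) + 8000 * ((a-1)^2 * (2-a)^3 * (p-1)^1 * (2-p)^1 * (2-q)^2 * (r-1)^2 * (s-1)^1 * (2-s)^1) + 7248 * ((a-1)^2 * (2-a)^3 * (p-1)^1 * (2-p)^1 * (2-q)^2 * (r-1)^2 * (s-1)^2) + 2376 * ((a-1)^2 * (2-a)^3 * (p-1)^1 * (2-p)^1 * (q-1)^1 * (2-q)^1 * (2-r)^2 * (2-s)^2) + 9200 * ((a-1)^2 * (2-a)^3 * (p-1)^1 * (2-p)^1 * (q-1)^1 * (2-q)^1 * (2-r)^2 * (s-1)^1 * (2-s)^1) + 8320 * ((a-1)^2 * (2-a)^3 * (p-1)^1 * (2-p)^1 * (q-1)^1 * (2-q)^1 * (2-r)^2 * (s-1)^2) + 9200 * ((a-1)^2 * (2-a)^3 * (p-1)^1 * (2-p)^1 * (q-1)^1 * (2-q)^1 * (r-1)^1 * (2-r)^1 * (2-s)^2) + 31740 * ((a-1)^2 * (2-a)^3 * (p-1)^1 * (2-p)^1 * (q-1)^1 * (2-q)^1 * (r-1)^1 * (2-r)^1 * (s-1)^1 * (2-s)^1) + 26576 * ((a-1)^2 * (2-a)^3 * (p-1)^1 * (2-p)^1 * (q-1)^1 * (2-q)^1 * (r-1)^1 * (2-r)^1 *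 (s-1)^2) + 8320 * ((a-1)^2 * (2-a)^3 * (p-1)^1 * (2-p)^1 * (q-1)^1 * (2-q)^1 * (r-1)^2 * (2-s)^2) + 26576 * ((a-1)^2 * (2-a)^3 * (p-1)^1 * (2-p)^1 * (q-1)^1 * (2-q)^1 * (r-1)^2 * (s-1)^1 * (2-s)^1) + 20976 * ((a-1)^2 * (2-a)^3 * (p-1)^1 * (2-p)^1 * (q-1)^1 * (2-q)^1 * (r-1)^2 * (s-1)^2) + 2604 * ((a-1)^2 * (2-a)^3 * (p-1)^1 * (2-p)^1 * (q-1)^2 * (2-r)^2 * (2-s)^2) + 8000 * ((a-1)^2 * (2-a)^3 * (p-1)^1 * (2-p)^1 * (q-1)^2 * (2-r)^2 * (s-1)^1 * (2-s)^1) + 6144 * ((a-1)^2 * (2-a)^3 * (p-1)^1 * (2-p)^1 * (q-1)^2 * (2-r)^2 * (s-1)^2) + 9130 * ((a-1)^2 * (2-a)^3 * (p-1)^1 * (2-p)^1 * (q-1)^2 * (r-1)^1 * (2-r)^1 * (2-s)^2) + 26576 * ((a-1)^2 * (2-a)^3 * (p-1)^1 * (2-p)^1 * (q-1)^2 * (r-1)^1 * (2-r)^1 * (s-1)^1 * (2-s)^1) + 19464 * ((a-1)^2 * (2-a)^3 * (p-1)^1 * (2-p)^1 * (q-1)^2 * (r-1)^1 * (2-r)^1 * (s-1)^2) + 7744 * ((a-1)^2 * (2-a)^3 * (p-1)^1 * (2-p)^1 * (q-1)^2 * (r-1)^2 * (2-s)^2) + 21648 * ((a-1)^2 * (2-a)^3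 * (p-1)^1 * (2-p)^1 * (q-1)^2 * (r-1)^2 * (s-1)^1 * (2-s)^1) + 15264 * ((a-1)^2 * (2-a)^3 * (p-1)^1 * (2-p)^1 * (q-1)^2 * (r-1)^2 * (s-1)^2) + 660 * ((a-1)^2 * (2-a)^3 * (p-1)^2 * (2-q)^2 * (2-r)^2 * (2-s)^2) + 2836 * ((a-1)^2 * (2-a)^3 * (p-1)^2 * (2-q)^2 * (2-r)^2 * (s-1)^1 * (2-s)^1) + 2785 * ((a-1)^2 * (2-a)^3 * (p-1)^2 * (2-q)^2 * (2-r)^2 * (s-1)^2) + 2112 * ((a-1)^2 * (2-a)^3 * (p-1)^2 * (2-q)^2 * (r-1)^1 * (2-r)^1 * (2-s)^2) + 8320 * ((a-1)^2 * (2-a)^3 * (p-1)^2 * (2-q)^2 * (r-1)^1 * (2-r)^1 * (s-1)^1 * (2-s)^1) + 7744 * ((a-1)^2 * (2-a)^3 * (p-1)^2 * (2-q)^2 * (r-1)^1 * (2-r)^1 * (s-1)^2) + 1680 * ((a-1)^2 * (2-a)^3 * (p-1)^2 * (2-q)^2 * (r-1)^2 * (2-s)^2) + 6144 * ((a-1)^2 * (2-a)^3 * (p-1)^2 * (2-q)^2 * (r-1)^2 * (s-1)^1 * (2-s)^1) + 5436 * ((a-1)^2 * (2-a)^3 * (p-1)^2 * (2-q)^2 * (r-1)^2 * (s-1)^2) + 2604 * ((a-1)^2 * (2-a)^3 * (p-1)^2 * (q-1)^1 * (2-q)^1 * (2-r)^2 * (2-s)^2) + 9130 * ((a-1)^2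 * (2-a)^3 * (p-1)^2 * (q-1)^1 * (2-q)^1 * (2-r)^2 * (s-1)^1 * (2-s)^1) + 7744 * ((a-1)^2 * (2-a)^3 * (p-1)^2 * (q-1)^1 * (2-q)^1 * (2-r)^2 * (s-1)^2) + 8000 * ((a-1)^2 * (2-a)^3 * (p-1)^2 * (q-1)^1 * (2-q)^1 * (r-1)^1 * (2-r)^1 * (2-s)^2) + 26576 * ((a-1)^2 * (2-a)^3 * (p-1)^2 * (q-1)^1 * (2-q)^1 * (r-1)^1 * (2-r)^1 * (s-1)^1 * (2-s)^1) + 21648 * ((a-1)^2 * (2-a)^3 * (p-1)^2 * (q-1)^1 * (2-q)^1 * (r-1)^1 * (2-r)^1 * (s-1)^2) + 6144 * ((a-1)^2 * (2-a)^3 * (p-1)^2 * (q-1)^1 * (2-q)^1 * (r-1)^2 * (2-s)^2) + 19464 * ((a-1)^2 * (2-a)^3 * (p-1)^2 * (q-1)^1 * (2-q)^1 * (r-1)^2 * (s-1)^1 * (2-s)^1) + 15264 * ((a-1)^2 * (2-a)^3 * (p-1)^2 * (q-1)^1 * (2-q)^1 * (r-1)^2 * (s-1)^2) + 2421 * ((a-1)^2 * (2-a)^3 * (p-1)^2 * (q-1)^2 * (2-r)^2 * (2-s)^2) + 7248 * ((a-1)^2 * (2-a)^3 * (p-1)^2 * (q-1)^2 * (2-r)^2 * (s-1)^1 * (2-s)^1) + 5436 * ((a-1)^2 * (2-a)^3 * (p-1)^2 * (q-1)^2 * (2-r)^2 * (s-1)^2) + 7248 * ((a-1)^2 * (2-a)^3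 * (p-1)^2 * (q-1)^2 * (r-1)^1 * (2-r)^1 * (2-s)^2) + 20976 * ((a-1)^2 * (2-a)^3 * (p-1)^2 * (q-1)^2 * (r-1)^1 * (2-r)^1 * (s-1)^1 * (2-s)^1) + 15264 * ((a-1)^2 * (2-a)^3 * (p-1)^2 * (q-1)^2 * (r-1)^1 * (2-r)^1 * (s-1)^2) + 5436 * ((a-1)^2 * (2-a)^3 * (p-1)^2 * (q-1)^2 * (r-1)^2 * (2-s)^2) + 15264 * ((a-1)^2 * (2-a)^3 * (p-1)^2 * (q-1)^2 * (r-1)^2 * (s-1)^1 * (2-s)^1) + 10800 * ((a-1)^2 * (2-a)^3 * (p-1)^2 * (q-1)^2 * (r-1)^2 * (s-1)^2) + 648 * ((a-1)^3 * (2-a)^2 * (2-p)^2 * (2-q)^2 * (2-r)^2 * (s-1)^1 * (2-s)^1) + 1044 * ((a-1)^3 * (2-a)^2 * (2-p)^2 * (2-q)^2 * (2-r)^2 * (s-1)^2) + 648 * ((a-1)^3 * (2-a)^2 * (2-p)^2 * (2-q)^2 * (r-1)^1 * (2-r)^1 * (2-s)^2) + 3636 * ((a-1)^3 * (2-a)^2 * (2-p)^2 * (2-q)^2 * (r-1)^1 * (2-r)^1 * (s-1)^1 * (2-s)^1) + 4098 * ((a-1)^3 * (2-a)^2 * (2-p)^2 * (2-q)^2 * (r-1)^1 * (2-r)^1 * (s-1)^2) + 1044 * ((a-1)^3 * (2-a)^2 * (2-p)^2 * (2-q)^2 * (r-1)^2 * (2-s)^2) + 4098 * ((a-1)^3 *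 (2-a)^2 * (2-p)^2 * (2-q)^2 * (r-1)^2 * (s-1)^1 * (2-s)^1) + 3831 * ((a-1)^3 * (2-a)^2 * (2-p)^2 * (2-q)^2 * (r-1)^2 * (s-1)^2) + 648 * ((a-1)^3 * (2-a)^2 * (2-p)^2 * (q-1)^1 * (2-q)^1 * (2-r)^2 * (2-s)^2) + 3312 * ((a-1)^3 * (2-a)^2 * (2-p)^2 * (q-1)^1 * (2-q)^1 * (2-r)^2 * (s-1)^1 * (2-s)^1) + 3456 * ((a-1)^3 * (2-a)^2 * (2-p)^2 * (q-1)^1 * (2-q)^1 * (2-r)^2 * (s-1)^2) + 3852 * ((a-1)^3 * (2-a)^2 * (2-p)^2 * (q-1)^1 * (2-q)^1 * (r-1)^1 * (2-r)^1 * (2-s)^2) + 14592 * ((a-1)^3 * (2-a)^2 * (2-p)^2 * (q-1)^1 * (2-q)^1 * (r-1)^1 * (2-r)^1 * (s-1)^1 * (2-s)^1) + 12960 * ((a-1)^3 * (2-a)^2 * (2-p)^2 * (q-1)^1 * (2-q)^1 * (r-1)^1 * (2-r)^1 * (s-1)^2) + 4494 * ((a-1)^3 * (2-a)^2 * (2-p)^2 * (q-1)^1 * (2-q)^1 * (r-1)^2 * (2-s)^2) + 14688 * ((a-1)^3 * (2-a)^2 * (2-p)^2 * (q-1)^1 * (2-q)^1 * (r-1)^2 * (s-1)^1 * (2-s)^1) + 11748 * ((a-1)^3 * (2-a)^2 * (2-p)^2 * (q-1)^1 * (2-q)^1 * (r-1)^2 * (s-1)^2) + 1044 * ((a-1)^3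 * (2-a)^2 * (2-p)^2 * (q-1)^2 * (2-r)^2 * (2-s)^2) + 3456 * ((a-1)^3 * (2-a)^2 * (2-p)^2 * (q-1)^2 * (2-r)^2 * (s-1)^1 * (2-s)^1) + 2808 * ((a-1)^3 * (2-a)^2 * (2-p)^2 * (q-1)^2 * (2-r)^2 * (s-1)^2) + 4494 * ((a-1)^3 * (2-a)^2 * (2-p)^2 * (q-1)^2 * (r-1)^1 * (2-r)^1 * (2-s)^2) + 13536 * ((a-1)^3 * (2-a)^2 * (2-p)^2 * (q-1)^2 * (r-1)^1 * (2-r)^1 * (s-1)^1 * (2-s)^1) + 10152 * ((a-1)^3 * (2-a)^2 * (2-p)^2 * (q-1)^2 * (r-1)^1 * (2-r)^1 * (s-1)^2) + 4497 * ((a-1)^3 * (2-a)^2 * (2-p)^2 * (q-1)^2 * (r-1)^2 * (2-s)^2) + 12684 * ((a-1)^3 * (2-a)^2 * (2-p)^2 * (q-1)^2 * (r-1)^2 * (s-1)^1 * (2-s)^1) + 8964 * ((a-1)^3 * (2-a)^2 * (2-p)^2 * (q-1)^2 * (r-1)^2 * (s-1)^2) + 648 * ((a-1)^3 * (2-a)^2 * (p-1)^1 * (2-p)^1 * (2-q)^2 * (2-r)^2 * (2-s)^2) + 3852 * ((a-1)^3 * (2-a)^2 * (p-1)^1 * (2-p)^1 * (2-q)^2 * (2-r)^2 * (s-1)^1 * (2-s)^1) + 4494 * ((a-1)^3 * (2-a)^2 * (p-1)^1 * (2-p)^1 * (2-q)^2 * (2-r)^2 * (s-1)^2) + 3312 *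 ((a-1)^3 * (2-a)^2 * (p-1)^1 * (2-p)^1 * (2-q)^2 * (r-1)^1 * (2-r)^1 * (2-s)^2) + 14592 * ((a-1)^3 * (2-a)^2 * (p-1)^1 * (2-p)^1 * (2-q)^2 * (r-1)^1 * (2-r)^1 * (s-1)^1 * (2-s)^1) + 14688 * ((a-1)^3 * (2-a)^2 * (p-1)^1 * (2-p)^1 * (2-q)^2 * (r-1)^1 * (2-r)^1 * (s-1)^2) + 3456 * ((a-1)^3 * (2-a)^2 * (p-1)^1 * (2-p)^1 * (2-q)^2 * (r-1)^2 * (2-s)^2) + 12960 * ((a-1)^3 * (2-a)^2 * (p-1)^1 * (2-p)^1 * (2-q)^2 * (r-1)^2 * (s-1)^1 * (2-s)^1) + 11748 * ((a-1)^3 * (2-a)^2 * (p-1)^1 * (2-p)^1 * (2-q)^2 * (r-1)^2 * (s-1)^2) + 3636 * ((a-1)^3 * (2-a)^2 * (p-1)^1 * (2-p)^1 * (q-1)^1 * (2-q)^1 * (2-r)^2 * (2-s)^2) + 14592 * ((a-1)^3 * (2-a)^2 * (p-1)^1 * (2-p)^1 * (q-1)^1 * (2-q)^1 * (2-r)^2 * (s-1)^1 * (2-s)^1) + 13536 * ((a-1)^3 * (2-a)^2 * (p-1)^1 * (2-p)^1 * (q-1)^1 * (2-q)^1 * (2-r)^2 * (s-1)^2) + 14592 * ((a-1)^3 * (2-a)^2 * (p-1)^1 * (2-p)^1 * (q-1)^1 * (2-q)^1 * (r-1)^1 * (2-r)^1 * (2-s)^2) + 51456 * ((a-1)^3 *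 (2-a)^2 * (p-1)^1 * (2-p)^1 * (q-1)^1 * (2-q)^1 * (r-1)^1 * (2-r)^1 * (s-1)^1 * (2-s)^1) + 43680 * ((a-1)^3 * (2-a)^2 * (p-1)^1 * (2-p)^1 * (q-1)^1 * (2-q)^1 * (r-1)^1 * (2-r)^1 * (s-1)^2) + 13536 * ((a-1)^3 * (2-a)^2 * (p-1)^1 * (2-p)^1 * (q-1)^1 * (2-q)^1 * (r-1)^2 * (2-s)^2) + 43680 * ((a-1)^3 * (2-a)^2 * (p-1)^1 * (2-p)^1 * (q-1)^1 * (2-q)^1 * (r-1)^2 * (s-1)^1 * (2-s)^1) + 34632 * ((a-1)^3 * (2-a)^2 * (p-1)^1 * (2-p)^1 * (q-1)^1 * (2-q)^1 * (r-1)^2 * (s-1)^2) + 4098 * ((a-1)^3 * (2-a)^2 * (p-1)^1 * (2-p)^1 * (q-1)^2 * (2-r)^2 * (2-s)^2) + 12960 * ((a-1)^3 * (2-a)^2 * (p-1)^1 * (2-p)^1 * (q-1)^2 * (2-r)^2 * (s-1)^1 * (2-s)^1) + 10152 * ((a-1)^3 * (2-a)^2 * (p-1)^1 * (2-p)^1 * (q-1)^2 * (2-r)^2 * (s-1)^2) + 14688 * ((a-1)^3 * (2-a)^2 * (p-1)^1 * (2-p)^1 * (q-1)^2 * (r-1)^1 * (2-r)^1 * (2-s)^2) + 43680 * ((a-1)^3 * (2-a)^2 * (p-1)^1 * (2-p)^1 * (q-1)^2 * (r-1)^1 * (2-r)^1 * (s-1)^1 * (2-s)^1) + 32400 * ((a-1)^3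 * (2-a)^2 * (p-1)^1 * (2-p)^1 * (q-1)^2 * (r-1)^1 * (2-r)^1 * (s-1)^2) + 12684 * ((a-1)^3 * (2-a)^2 * (p-1)^1 * (2-p)^1 * (q-1)^2 * (r-1)^2 * (2-s)^2) + 35928 * ((a-1)^3 * (2-a)^2 * (p-1)^1 * (2-p)^1 * (q-1)^2 * (r-1)^2 * (s-1)^1 * (2-s)^1) + 25488 * ((a-1)^3 * (2-a)^2 * (p-1)^1 * (2-p)^1 * (q-1)^2 * (r-1)^2 * (s-1)^2) + 1044 * ((a-1)^3 * (2-a)^2 * (p-1)^2 * (2-q)^2 * (2-r)^2 * (2-s)^2) + 4494 * ((a-1)^3 * (2-a)^2 * (p-1)^2 * (2-q)^2 * (2-r)^2 * (s-1)^1 * (2-s)^1) + 4497 * ((a-1)^3 * (2-a)^2 * (p-1)^2 * (2-q)^2 * (2-r)^2 * (s-1)^2) + 3456 * ((a-1)^3 * (2-a)^2 * (p-1)^2 * (2-q)^2 * (r-1)^1 * (2-r)^1 * (2-s)^2) + 13536 * ((a-1)^3 * (2-a)^2 * (p-1)^2 * (2-q)^2 * (r-1)^1 * (2-r)^1 * (s-1)^1 * (2-s)^1) + 12684 * ((a-1)^3 * (2-a)^2 * (p-1)^2 * (2-q)^2 * (r-1)^1 * (2-r)^1 * (s-1)^2) + 2808 * ((a-1)^3 * (2-a)^2 * (p-1)^2 * (2-q)^2 * (r-1)^2 * (2-s)^2) + 10152 * ((a-1)^3 * (2-a)^2 * (p-1)^2 * (2-q)^2 * (r-1)^2 * (s-1)^1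 * (2-s)^1) + 8964 * ((a-1)^3 * (2-a)^2 * (p-1)^2 * (2-q)^2 * (r-1)^2 * (s-1)^2) + 4098 * ((a-1)^3 * (2-a)^2 * (p-1)^2 * (q-1)^1 * (2-q)^1 * (2-r)^2 * (2-s)^2) + 14688 * ((a-1)^3 * (2-a)^2 * (p-1)^2 * (q-1)^1 * (2-q)^1 * (2-r)^2 * (s-1)^1 * (2-s)^1) + 12684 * ((a-1)^3 * (2-a)^2 * (p-1)^2 * (q-1)^1 * (2-q)^1 * (2-r)^2 * (s-1)^2) + 12960 * ((a-1)^3 * (2-a)^2 * (p-1)^2 * (q-1)^1 * (2-q)^1 * (r-1)^1 * (2-r)^1 * (2-s)^2) + 43680 * ((a-1)^3 * (2-a)^2 * (p-1)^2 * (q-1)^1 * (2-q)^1 * (r-1)^1 * (2-r)^1 * (s-1)^1 * (2-s)^1) + 35928 * ((a-1)^3 * (2-a)^2 * (p-1)^2 * (q-1)^1 * (2-q)^1 * (r-1)^1 * (2-r)^1 * (s-1)^2) + 10152 * ((a-1)^3 * (2-a)^2 * (p-1)^2 * (q-1)^1 * (2-q)^1 * (r-1)^2 * (2-s)^2) + 32400 * ((a-1)^3 * (2-a)^2 * (p-1)^2 * (q-1)^1 * (2-q)^1 * (r-1)^2 * (s-1)^1 * (2-s)^1) + 25488 * ((a-1)^3 * (2-a)^2 * (p-1)^2 * (q-1)^1 * (2-q)^1 * (r-1)^2 * (s-1)^2) + 3831 * ((a-1)^3 * (2-a)^2 * (p-1)^2 * (q-1)^2 * (2-r)^2 * (2-s)^2)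 + 11748 * ((a-1)^3 * (2-a)^2 * (p-1)^2 * (q-1)^2 * (2-r)^2 * (s-1)^1 * (2-s)^1) + 8964 * ((a-1)^3 * (2-a)^2 * (p-1)^2 * (q-1)^2 * (2-r)^2 * (s-1)^2) + 11748 * ((a-1)^3 * (2-a)^2 * (p-1)^2 * (q-1)^2 * (r-1)^1 * (2-r)^1 * (2-s)^2) + 34632 * ((a-1)^3 * (2-a)^2 * (p-1)^2 * (q-1)^2 * (r-1)^1 * (2-r)^1 * (s-1)^1 * (2-s)^1) + 25488 * ((a-1)^3 * (2-a)^2 * (p-1)^2 * (q-1)^2 * (r-1)^1 * (2-r)^1 * (s-1)^2) + 8964 * ((a-1)^3 * (2-a)^2 * (p-1)^2 * (q-1)^2 * (r-1)^2 * (2-s)^2) + 25488 * ((a-1)^3 * (2-a)^2 * (p-1)^2 * (q-1)^2 * (r-1)^2 * (s-1)^1 * (2-s)^1) + 18144 * ((a-1)^3 * (2-a)^2 * (p-1)^2 * (q-1)^2 * (r-1)^2 * (s-1)^2) + 324 * ((a-1)^4 * (2-a)^1 * (2-p)^2 * (2-q)^2 * (2-r)^2 * (s-1)^1 * (2-s)^1) + 621 * ((a-1)^4 * (2-a)^1 * (2-p)^2 * (2-q)^2 * (2-r)^2 * (s-1)^2) + 324 * ((a-1)^4 * (2-a)^1 * (2-p)^2 * (2-q)^2 * (r-1)^1 * (2-r)^1 * (2-s)^2) + 1998 * ((a-1)^4 * (2-a)^1 * (2-p)^2 * (2-q)^2 * (r-1)^1 * (2-r)^1 * (s-1)^1 *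 (2-s)^1) + 2484 * ((a-1)^4 * (2-a)^1 * (2-p)^2 * (2-q)^2 * (r-1)^1 * (2-r)^1 * (s-1)^2) + 621 * ((a-1)^4 * (2-a)^1 * (2-p)^2 * (2-q)^2 * (r-1)^2 * (2-s)^2) + 2484 * ((a-1)^4 * (2-a)^1 * (2-p)^2 * (2-q)^2 * (r-1)^2 * (s-1)^1 * (2-s)^1) + 2415 * ((a-1)^4 * (2-a)^1 * (2-p)^2 * (2-q)^2 * (r-1)^2 * (s-1)^2) + 324 * ((a-1)^4 * (2-a)^1 * (2-p)^2 * (q-1)^1 * (2-q)^1 * (2-r)^2 * (2-s)^2) + 1890 * ((a-1)^4 * (2-a)^1 * (2-p)^2 * (q-1)^1 * (2-q)^1 * (2-r)^2 * (s-1)^1 * (2-s)^1) + 2160 * ((a-1)^4 * (2-a)^1 * (2-p)^2 * (q-1)^1 * (2-q)^1 * (2-r)^2 * (s-1)^2) + 2106 * ((a-1)^4 * (2-a)^1 * (2-p)^2 * (q-1)^1 * (2-q)^1 * (r-1)^1 * (2-r)^1 * (2-s)^2) + 8694 * ((a-1)^4 * (2-a)^1 * (2-p)^2 * (q-1)^1 * (2-q)^1 * (r-1)^1 * (2-r)^1 * (s-1)^1 * (2-s)^1) + 8208 * ((a-1)^4 * (2-a)^1 * (2-p)^2 * (q-1)^1 * (2-q)^1 * (r-1)^1 * (2-r)^1 * (s-1)^2) + 2754 * ((a-1)^4 * (2-a)^1 * (2-p)^2 * (q-1)^1 * (2-q)^1 * (r-1)^2 * (2-s)^2) + 9318 * ((a-1)^4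 * (2-a)^1 * (2-p)^2 * (q-1)^1 * (2-q)^1 * (r-1)^2 * (s-1)^1 * (2-s)^1) + 7668 * ((a-1)^4 * (2-a)^1 * (2-p)^2 * (q-1)^1 * (2-q)^1 * (r-1)^2 * (s-1)^2) + 621 * ((a-1)^4 * (2-a)^1 * (2-p)^2 * (q-1)^2 * (2-r)^2 * (2-s)^2) + 2160 * ((a-1)^4 * (2-a)^1 * (2-p)^2 * (q-1)^2 * (2-r)^2 * (s-1)^1 * (2-s)^1) + 1836 * ((a-1)^4 * (2-a)^1 * (2-p)^2 * (q-1)^2 * (2-r)^2 * (s-1)^2) + 2754 * ((a-1)^4 * (2-a)^1 * (2-p)^2 * (q-1)^2 * (r-1)^1 * (2-r)^1 * (2-s)^2) + 8640 * ((a-1)^4 * (2-a)^1 * (2-p)^2 * (q-1)^2 * (r-1)^1 * (2-r)^1 * (s-1)^1 * (2-s)^1) + 6696 * ((a-1)^4 * (2-a)^1 * (2-p)^2 * (q-1)^2 * (r-1)^1 * (2-r)^1 * (s-1)^2) + 2928 * ((a-1)^4 * (2-a)^1 * (2-p)^2 * (q-1)^2 * (r-1)^2 * (2-s)^2) + 8424 * ((a-1)^4 * (2-a)^1 * (2-p)^2 * (q-1)^2 * (r-1)^2 * (s-1)^1 * (2-s)^1) + 6048 * ((a-1)^4 * (2-a)^1 * (2-p)^2 * (q-1)^2 * (r-1)^2 * (s-1)^2) + 324 * ((a-1)^4 * (2-a)^1 * (p-1)^1 * (2-p)^1 * (2-q)^2 * (2-r)^2 * (2-s)^2) + 2106 *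 ((a-1)^4 * (2-a)^1 * (p-1)^1 * (2-p)^1 * (2-q)^2 * (2-r)^2 * (s-1)^1 * (2-s)^1) + 2754 * ((a-1)^4 * (2-a)^1 * (p-1)^1 * (2-p)^1 * (2-q)^2 * (2-r)^2 * (s-1)^2) + 1890 * ((a-1)^4 * (2-a)^1 * (p-1)^1 * (2-p)^1 * (2-q)^2 * (r-1)^1 * (2-r)^1 * (2-s)^2) + 8694 * ((a-1)^4 * (2-a)^1 * (p-1)^1 * (2-p)^1 * (2-q)^2 * (r-1)^1 * (2-r)^1 * (s-1)^1 * (2-s)^1) + 9318 * ((a-1)^4 * (2-a)^1 * (p-1)^1 * (2-p)^1 * (2-q)^2 * (r-1)^1 * (2-r)^1 * (s-1)^2) + 2160 * ((a-1)^4 * (2-a)^1 * (p-1)^1 * (2-p)^1 * (2-q)^2 * (r-1)^2 * (2-s)^2) + 8208 * ((a-1)^4 * (2-a)^1 * (p-1)^1 * (2-p)^1 * (2-q)^2 * (r-1)^2 * (s-1)^1 * (2-s)^1) + 7668 * ((a-1)^4 * (2-a)^1 * (p-1)^1 * (2-p)^1 * (2-q)^2 * (r-1)^2 * (s-1)^2) + 1998 * ((a-1)^4 * (2-a)^1 * (p-1)^1 * (2-p)^1 * (q-1)^1 * (2-q)^1 * (2-r)^2 * (2-s)^2) + 8694 * ((a-1)^4 * (2-a)^1 * (p-1)^1 * (2-p)^1 * (q-1)^1 * (2-q)^1 * (2-r)^2 * (s-1)^1 * (2-s)^1) + 8640 * ((a-1)^4 * (2-a)^1 * (p-1)^1 *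 (2-p)^1 * (q-1)^1 * (2-q)^1 * (2-r)^2 * (s-1)^2) + 8694 * ((a-1)^4 * (2-a)^1 * (p-1)^1 * (2-p)^1 * (q-1)^1 * (2-q)^1 * (r-1)^1 * (2-r)^1 * (2-s)^2) + 32286 * ((a-1)^4 * (2-a)^1 * (p-1)^1 * (2-p)^1 * (q-1)^1 * (2-q)^1 * (r-1)^1 * (2-r)^1 * (s-1)^1 * (2-s)^1) + 28620 * ((a-1)^4 * (2-a)^1 * (p-1)^1 * (2-p)^1 * (q-1)^1 * (2-q)^1 * (r-1)^1 * (2-r)^1 * (s-1)^2) + 8640 * ((a-1)^4 * (2-a)^1 * (p-1)^1 * (2-p)^1 * (q-1)^1 * (2-q)^1 * (r-1)^2 * (2-s)^2) + 28620 * ((a-1)^4 * (2-a)^1 * (p-1)^1 * (2-p)^1 * (q-1)^1 * (2-q)^1 * (r-1)^2 * (s-1)^1 * (2-s)^1) + 23220 * ((a-1)^4 * (2-a)^1 * (p-1)^1 * (2-p)^1 * (q-1)^1 * (2-q)^1 * (r-1)^2 * (s-1)^2) + 2484 * ((a-1)^4 * (2-a)^1 * (p-1)^1 * (2-p)^1 * (q-1)^2 * (2-r)^2 * (2-s)^2) + 8208 * ((a-1)^4 * (2-a)^1 * (p-1)^1 * (2-p)^1 * (q-1)^2 * (2-r)^2 * (s-1)^1 * (2-s)^1) + 6696 * ((a-1)^4 * (2-a)^1 * (p-1)^1 * (2-p)^1 * (q-1)^2 * (2-r)^2 * (s-1)^2) + 9318 * ((a-1)^4 * (2-a)^1 * (p-1)^1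 * (2-p)^1 * (q-1)^2 * (r-1)^1 * (2-r)^1 * (2-s)^2) + 28620 * ((a-1)^4 * (2-a)^1 * (p-1)^1 * (2-p)^1 * (q-1)^2 * (r-1)^1 * (2-r)^1 * (s-1)^1 * (2-s)^1) + 21816 * ((a-1)^4 * (2-a)^1 * (p-1)^1 * (2-p)^1 * (q-1)^2 * (r-1)^1 * (2-r)^1 * (s-1)^2) + 8424 * ((a-1)^4 * (2-a)^1 * (p-1)^1 * (2-p)^1 * (q-1)^2 * (r-1)^2 * (2-s)^2) + 24300 * ((a-1)^4 * (2-a)^1 * (p-1)^1 * (2-p)^1 * (q-1)^2 * (r-1)^2 * (s-1)^1 * (2-s)^1) + 17496 * ((a-1)^4 * (2-a)^1 * (p-1)^1 * (2-p)^1 * (q-1)^2 * (r-1)^2 * (s-1)^2) + 621 * ((a-1)^4 * (2-a)^1 * (p-1)^2 * (2-q)^2 * (2-r)^2 * (2-s)^2) + 2754 * ((a-1)^4 * (2-a)^1 * (p-1)^2 * (2-q)^2 * (2-r)^2 * (s-1)^1 * (2-s)^1) + 2928 * ((a-1)^4 * (2-a)^1 * (p-1)^2 * (2-q)^2 * (2-r)^2 * (s-1)^2) + 2160 * ((a-1)^4 * (2-a)^1 * (p-1)^2 * (2-q)^2 * (r-1)^1 * (2-r)^1 * (2-s)^2) + 8640 * ((a-1)^4 * (2-a)^1 * (p-1)^2 * (2-q)^2 * (r-1)^1 * (2-r)^1 * (s-1)^1 * (2-s)^1) + 8424 * ((a-1)^4 * (2-a)^1 * (p-1)^2 * (2-q)^2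 * (r-1)^1 * (2-r)^1 * (s-1)^2) + 1836 * ((a-1)^4 * (2-a)^1 * (p-1)^2 * (2-q)^2 * (r-1)^2 * (2-s)^2) + 6696 * ((a-1)^4 * (2-a)^1 * (p-1)^2 * (2-q)^2 * (r-1)^2 * (s-1)^1 * (2-s)^1) + 6048 * ((a-1)^4 * (2-a)^1 * (p-1)^2 * (2-q)^2 * (r-1)^2 * (s-1)^2) + 2484 * ((a-1)^4 * (2-a)^1 * (p-1)^2 * (q-1)^1 * (2-q)^1 * (2-r)^2 * (2-s)^2) + 9318 * ((a-1)^4 * (2-a)^1 * (p-1)^2 * (q-1)^1 * (2-q)^1 * (2-r)^2 * (s-1)^1 * (2-s)^1) + 8424 * ((a-1)^4 * (2-a)^1 * (p-1)^2 * (q-1)^1 * (2-q)^1 * (2-r)^2 * (s-1)^2) + 8208 * ((a-1)^4 * (2-a)^1 * (p-1)^2 * (q-1)^1 * (2-q)^1 * (r-1)^1 * (2-r)^1 * (2-s)^2) + 28620 * ((a-1)^4 * (2-a)^1 * (p-1)^2 * (q-1)^1 * (2-q)^1 * (r-1)^1 * (2-r)^1 * (s-1)^1 * (2-s)^1) + 24300 * ((a-1)^4 * (2-a)^1 * (p-1)^2 * (q-1)^1 * (2-q)^1 * (r-1)^1 * (2-r)^1 * (s-1)^2) + 6696 * ((a-1)^4 * (2-a)^1 * (p-1)^2 * (q-1)^1 * (2-q)^1 * (r-1)^2 * (2-s)^2) + 21816 * ((a-1)^4 * (2-a)^1 * (p-1)^2 * (q-1)^1 * (2-q)^1 * (r-1)^2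 * (s-1)^1 * (2-s)^1) + 17496 * ((a-1)^4 * (2-a)^1 * (p-1)^2 * (q-1)^1 * (2-q)^1 * (r-1)^2 * (s-1)^2) + 2415 * ((a-1)^4 * (2-a)^1 * (p-1)^2 * (q-1)^2 * (2-r)^2 * (2-s)^2) + 7668 * ((a-1)^4 * (2-a)^1 * (p-1)^2 * (q-1)^2 * (2-r)^2 * (s-1)^1 * (2-s)^1) + 6048 * ((a-1)^4 * (2-a)^1 * (p-1)^2 * (q-1)^2 * (2-r)^2 * (s-1)^2) + 7668 * ((a-1)^4 * (2-a)^1 * (p-1)^2 * (q-1)^2 * (r-1)^1 * (2-r)^1 * (2-s)^2) + 23220 * ((a-1)^4 * (2-a)^1 * (p-1)^2 * (q-1)^2 * (r-1)^1 * (2-r)^1 * (s-1)^1 * (2-s)^1) + 17496 * ((a-1)^4 * (2-a)^1 * (p-1)^2 * (q-1)^2 * (r-1)^1 * (2-r)^1 * (s-1)^2) + 6048 * ((a-1)^4 * (2-a)^1 * (p-1)^2 * (q-1)^2 * (r-1)^2 * (2-s)^2) + 17496 * ((a-1)^4 * (2-a)^1 * (p-1)^2 * (q-1)^2 * (r-1)^2 * (s-1)^1 * (2-s)^1) + 12636 * ((a-1)^4 * (2-a)^1 * (p-1)^2 * (q-1)^2 * (r-1)^2 * (s-1)^2) + 81 * ((a-1)^5 * (2-p)^2 * (2-q)^2 * (2-r)^2 * (s-1)^2) + 162 * ((a-1)^5 * (2-p)^2 * (2-q)^2 * (r-1)^1 * (2-r)^1 * (s-1)^1 * (2-s)^1)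 + 378 * ((a-1)^5 * (2-p)^2 * (2-q)^2 * (r-1)^1 * (2-r)^1 * (s-1)^2) + 81 * ((a-1)^5 * (2-p)^2 * (2-q)^2 * (r-1)^2 * (2-s)^2) + 378 * ((a-1)^5 * (2-p)^2 * (2-q)^2 * (r-1)^2 * (s-1)^1 * (2-s)^1) + 441 * ((a-1)^5 * (2-p)^2 * (2-q)^2 * (r-1)^2 * (s-1)^2) + 162 * ((a-1)^5 * (2-p)^2 * (q-1)^1 * (2-q)^1 * (2-r)^2 * (s-1)^1 * (2-s)^1) + 324 * ((a-1)^5 * (2-p)^2 * (q-1)^1 * (2-q)^1 * (2-r)^2 * (s-1)^2) + 162 * ((a-1)^5 * (2-p)^2 * (q-1)^1 * (2-q)^1 * (r-1)^1 * (2-r)^1 * (2-s)^2) + 1134 * ((a-1)^5 * (2-p)^2 * (q-1)^1 * (2-q)^1 * (r-1)^1 * (2-r)^1 * (s-1)^1 * (2-s)^1) + 1404 * ((a-1)^5 * (2-p)^2 * (q-1)^1 * (2-q)^1 * (r-1)^1 * (2-r)^1 * (s-1)^2) + 432 * ((a-1)^5 * (2-p)^2 * (q-1)^1 * (2-q)^1 * (r-1)^2 * (2-s)^2) + 1656 * ((a-1)^5 * (2-p)^2 * (q-1)^1 * (2-q)^1 * (r-1)^2 * (s-1)^1 * (2-s)^1) + 1512 * ((a-1)^5 * (2-p)^2 * (q-1)^1 * (2-q)^1 * (r-1)^2 * (s-1)^2) + 81 * ((a-1)^5 * (2-p)^2 * (q-1)^2 * (2-r)^2 * (2-s)^2) +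 324 * ((a-1)^5 * (2-p)^2 * (q-1)^2 * (2-r)^2 * (s-1)^1 * (2-s)^1) + 324 * ((a-1)^5 * (2-p)^2 * (q-1)^2 * (2-r)^2 * (s-1)^2) + 432 * ((a-1)^5 * (2-p)^2 * (q-1)^2 * (r-1)^1 * (2-r)^1 * (2-s)^2) + 1512 * ((a-1)^5 * (2-p)^2 * (q-1)^2 * (r-1)^1 * (2-r)^1 * (s-1)^1 * (2-s)^1) + 1296 * ((a-1)^5 * (2-p)^2 * (q-1)^2 * (r-1)^1 * (2-r)^1 * (s-1)^2) + 576 * ((a-1)^5 * (2-p)^2 * (q-1)^2 * (r-1)^2 * (2-s)^2) + 1728 * ((a-1)^5 * (2-p)^2 * (q-1)^2 * (r-1)^2 * (s-1)^1 * (2-s)^1) + 1296 * ((a-1)^5 * (2-p)^2 * (q-1)^2 * (r-1)^2 * (s-1)^2) + 162 * ((a-1)^5 * (p-1)^1 * (2-p)^1 * (2-q)^2 * (2-r)^2 * (s-1)^1 * (2-s)^1) + 432 * ((a-1)^5 * (p-1)^1 * (2-p)^1 * (2-q)^2 * (2-r)^2 * (s-1)^2) + 162 * ((a-1)^5 * (p-1)^1 * (2-p)^1 * (2-q)^2 * (r-1)^1 * (2-r)^1 * (2-s)^2) + 1134 * ((a-1)^5 * (p-1)^1 * (2-p)^1 * (2-q)^2 * (r-1)^1 * (2-r)^1 * (s-1)^1 * (2-s)^1) + 1656 * ((a-1)^5 * (p-1)^1 * (2-p)^1 * (2-q)^2 * (r-1)^1 * (2-r)^1 * (s-1)^2) +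 324 * ((a-1)^5 * (p-1)^1 * (2-p)^1 * (2-q)^2 * (r-1)^2 * (2-s)^2) + 1404 * ((a-1)^5 * (p-1)^1 * (2-p)^1 * (2-q)^2 * (r-1)^2 * (s-1)^1 * (2-s)^1) + 1512 * ((a-1)^5 * (p-1)^1 * (2-p)^1 * (2-q)^2 * (r-1)^2 * (s-1)^2) + 162 * ((a-1)^5 * (p-1)^1 * (2-p)^1 * (q-1)^1 * (2-q)^1 * (2-r)^2 * (2-s)^2) + 1134 * ((a-1)^5 * (p-1)^1 * (2-p)^1 * (q-1)^1 * (2-q)^1 * (2-r)^2 * (s-1)^1 * (2-s)^1) + 1512 * ((a-1)^5 * (p-1)^1 * (2-p)^1 * (q-1)^1 * (2-q)^1 * (2-r)^2 * (s-1)^2) + 1134 * ((a-1)^5 * (p-1)^1 * (2-p)^1 * (q-1)^1 * (2-q)^1 * (r-1)^1 * (2-r)^1 * (2-s)^2) + 5274 * ((a-1)^5 * (p-1)^1 * (2-p)^1 * (q-1)^1 * (2-q)^1 * (r-1)^1 * (2-r)^1 * (s-1)^1 * (2-s)^1) + 5508 * ((a-1)^5 * (p-1)^1 * (2-p)^1 * (q-1)^1 * (2-q)^1 * (r-1)^1 * (2-r)^1 * (s-1)^2) + 1512 * ((a-1)^5 * (p-1)^1 * (2-p)^1 * (q-1)^1 * (2-q)^1 * (r-1)^2 * (2-s)^2) + 5508 * ((a-1)^5 * (p-1)^1 * (2-p)^1 * (q-1)^1 * (2-q)^1 * (r-1)^2 * (s-1)^1 * (2-s)^1) + 4860 * ((a-1)^5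 * (p-1)^1 * (2-p)^1 * (q-1)^1 * (2-q)^1 * (r-1)^2 * (s-1)^2) + 378 * ((a-1)^5 * (p-1)^1 * (2-p)^1 * (q-1)^2 * (2-r)^2 * (2-s)^2) + 1404 * ((a-1)^5 * (p-1)^1 * (2-p)^1 * (q-1)^2 * (2-r)^2 * (s-1)^1 * (2-s)^1) + 1296 * ((a-1)^5 * (p-1)^1 * (2-p)^1 * (q-1)^2 * (2-r)^2 * (s-1)^2) + 1656 * ((a-1)^5 * (p-1)^1 * (2-p)^1 * (q-1)^2 * (r-1)^1 * (2-r)^1 * (2-s)^2) + 5508 * ((a-1)^5 * (p-1)^1 * (2-p)^1 * (q-1)^2 * (r-1)^1 * (2-r)^1 * (s-1)^1 * (2-s)^1) + 4536 * ((a-1)^5 * (p-1)^1 * (2-p)^1 * (q-1)^2 * (r-1)^1 * (2-r)^1 * (s-1)^2) + 1728 * ((a-1)^5 * (p-1)^1 * (2-p)^1 * (q-1)^2 * (r-1)^2 * (2-s)^2) + 5184 * ((a-1)^5 * (p-1)^1 * (2-p)^1 * (q-1)^2 * (r-1)^2 * (s-1)^1 * (2-s)^1) + 3888 * ((a-1)^5 * (p-1)^1 * (2-p)^1 * (q-1)^2 * (r-1)^2 * (s-1)^2) + 81 * ((a-1)^5 * (p-1)^2 * (2-q)^2 * (2-r)^2 * (2-s)^2) + 432 * ((a-1)^5 * (p-1)^2 * (2-q)^2 * (2-r)^2 * (s-1)^1 * (2-s)^1) + 576 * ((a-1)^5 * (p-1)^2 * (2-q)^2 * (2-r)^2 * (s-1)^2)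 + 324 * ((a-1)^5 * (p-1)^2 * (2-q)^2 * (r-1)^1 * (2-r)^1 * (2-s)^2) + 1512 * ((a-1)^5 * (p-1)^2 * (2-q)^2 * (r-1)^1 * (2-r)^1 * (s-1)^1 * (2-s)^1) + 1728 * ((a-1)^5 * (p-1)^2 * (2-q)^2 * (r-1)^1 * (2-r)^1 * (s-1)^2) + 324 * ((a-1)^5 * (p-1)^2 * (2-q)^2 * (r-1)^2 * (2-s)^2) + 1296 * ((a-1)^5 * (p-1)^2 * (2-q)^2 * (r-1)^2 * (s-1)^1 * (2-s)^1) + 1296 * ((a-1)^5 * (p-1)^2 * (2-q)^2 * (r-1)^2 * (s-1)^2) + 378 * ((a-1)^5 * (p-1)^2 * (q-1)^1 * (2-q)^1 * (2-r)^2 * (2-s)^2) + 1656 * ((a-1)^5 * (p-1)^2 * (q-1)^1 * (2-q)^1 * (2-r)^2 * (s-1)^1 * (2-s)^1) + 1728 * ((a-1)^5 * (p-1)^2 * (q-1)^1 * (2-q)^1 * (2-r)^2 * (s-1)^2) + 1404 * ((a-1)^5 * (p-1)^2 * (q-1)^1 * (2-q)^1 * (r-1)^1 * (2-r)^1 * (2-s)^2) + 5508 * ((a-1)^5 * (p-1)^2 * (q-1)^1 * (2-q)^1 * (r-1)^1 * (2-r)^1 * (s-1)^1 * (2-s)^1) + 5184 * ((a-1)^5 * (p-1)^2 * (q-1)^1 * (2-q)^1 * (r-1)^1 * (2-r)^1 * (s-1)^2) + 1296 * ((a-1)^5 * (p-1)^2 * (q-1)^1 * (2-q)^1 * (r-1)^2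 * (2-s)^2) + 4536 * ((a-1)^5 * (p-1)^2 * (q-1)^1 * (2-q)^1 * (r-1)^2 * (s-1)^1 * (2-s)^1) + 3888 * ((a-1)^5 * (p-1)^2 * (q-1)^1 * (2-q)^1 * (r-1)^2 * (s-1)^2) + 441 * ((a-1)^5 * (p-1)^2 * (q-1)^2 * (2-r)^2 * (2-s)^2) + 1512 * ((a-1)^5 * (p-1)^2 * (q-1)^2 * (2-r)^2 * (s-1)^1 * (2-s)^1) + 1296 * ((a-1)^5 * (p-1)^2 * (q-1)^2 * (2-r)^2 * (s-1)^2) + 1512 * ((a-1)^5 * (p-1)^2 * (q-1)^2 * (r-1)^1 * (2-r)^1 * (2-s)^2) + 4860 * ((a-1)^5 * (p-1)^2 * (q-1)^2 * (r-1)^1 * (2-r)^1 * (s-1)^1 * (2-s)^1) + 3888 * ((a-1)^5 * (p-1)^2 * (q-1)^2 * (r-1)^1 * (2-r)^1 * (s-1)^2) + 1296 * ((a-1)^5 * (p-1)^2 * (q-1)^2 * (r-1)^2 * (2-s)^2) + 3888 * ((a-1)^5 * (p-1)^2 * (q-1)^2 * (r-1)^2 * (s-1)^1 * (2-s)^1) + 2916 * ((a-1)^5 * (p-1)^2 * (q-1)^2 * (r-1)^2 * (s-1)^2)) by ring.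
    pos_tac. }
  apply Rmult_le_reg_l with 1; [lra| rewrite Rmult_0_r; exact H].
Qed.


Lemma exp_neg (x : R) : exp (- x) = / exp x.
Proof. apply exp_Ropp. Qed.

Lemma cosh_u (x : R) : cosh x = (exp x + / exp x) / 2.
Proof. unfold cosh. rewrite exp_Ropp. reflexivity. Qed.

Lemma cosh_ge1 (x : R) : 1 <= cosh x.
Proof.
  rewrite cosh_u. pose proof (exp_pos x) as H. set (u := exp x) in *.
  assert (u + / u - 2 = (u - 1)^2 / u) by (field; lra).
  assert (0 <= (u-1)^2 / u) by (apply div_pos'; [lra| apply pow2_ge_0]).
  lra.
Qed.

Lemma cosh_0' : cosh 0 = 1.
Proof. rewrite cosh_u exp_0. field. Qed.

Lemma cosh_lt (x y : R) : 0 <= x -> x < y -> cosh x < cosh y.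
Proof.
  intros Hx Hxy. rewrite !cosh_u.
  assert (Hu : 1 <= exp x) by (rewrite <- exp_0; destruct Hx as [Hx|Hx]; [left; apply exp_increasing; exact Hx| right; rewrite Hx; reflexivity]).
  assert (Huv : exp x < exp y) by (apply exp_increasing; exact Hxy).
  set (u := exp x) in *. set (v := exp y) in *.
  assert (v + / v - (u + / u) = (v - u) * (u*v - 1) / (u*v)) by (field; lra).
  assert (0 < (v - u) * (u*v - 1) / (u*v)).
  { apply div_spos; [nra|]. apply Rmult_lt_0_compat; nra. }
  lra.
Qed.

Lemma cosh_le (x y : R) : 0 <= x -> x <= y -> cosh x <= cosh y.
Proof.
  intros Hx [H|H]; [left; apply cosh_lt; auto| rewrite H; lra].
Qed.

Lemma arccosh_spec (x : R) : 1 <= x ->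
  cosh (arccosh x) = x /\ 0 <= arccosh x /\ (1 < x -> 0 < arccosh x).
Proof.
  intros Hx. unfold arccosh.
  set (w := sqrt (x * x - 1)).
  assert (Hw0 : 0 <= w) by apply sqrt_pos.
  assert (Hw2 : w * w = x * x - 1) by (apply sqrt_sqrt; nra).
  assert (Hz : 1 <= x + w) by lra.
  split; [|split].
  - rewrite cosh_u exp_ln; [|lra].
    assert (/ (x + w) = x - w).
    { apply Rmult_eq_reg_l with (x + w); [|lra]. rewrite Rinv_r; [nra|lra]. }
    rewrite H. lra.
  - rewrite <- ln_1. destruct Hz as [Hz|Hz]; [left; apply ln_increasing; lra| rewrite Hz; lra].
  - intros H1. rewrite <- ln_1. apply ln_increasing; lra.
Qed.

Lemma arccosh_le (x y : R) : 1 <= x <= y -> arccosh x <= arccosh y.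
Proof.
  intros [H1 H2]. destruct (Rle_or_lt (arccosh x) (arccosh y)) as [H|H]; auto.
  destruct (arccosh_spec x) as [Ex [Px _]]; [lra|].
  destruct (arccosh_spec y) as [Ey [Py _]]; [lra|].
  pose proof (cosh_lt _ _ Py H). lra.
Qed.

Lemma le_arccosh_cosh (l m : R) : 1 <= m -> 0 <= l -> l <= arccosh m -> cosh l <= m.
Proof.
  intros Hm Hl H. destruct (arccosh_spec m Hm) as [E _].
  rewrite <- E. apply cosh_le; auto.
Qed.

Lemma lt_arccosh_cosh (l m : R) : 1 <= m -> 0 <= l -> l < arccosh m -> cosh l < m.
Proof.
  intros Hm Hl H. destruct (arccosh_spec m Hm) as [E _].
  rewrite <- E. apply cosh_lt; auto.
Qed.

Lemma gt_arccosh_cosh (l m : R) : 1 <= m -> arccosh m < l -> m < cosh l.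
Proof.
  intros Hm H. destruct (arccosh_spec m Hm) as [E [P _]].
  rewrite <- E. apply cosh_lt; auto.
Qed.

Lemma b_facts (n : nat) : (9 <= n)%nat ->
  1 < b_const n <= 2 /\
  ((10 <= n)%nat -> (9 - b_const n) / (b_const n + 7) = cos (2*PI/INR n)).
Proof.
  intros Hn. destruct (cn_facts n Hn) as [[Hc1 Hc2] [_ [H10 _]]].
  unfold b_const. destruct (n == 9%nat)%nat eqn:E.
  - split; [lra|]. intros H. move/eqP: E => E. subst n. discriminate H.
  - assert (H10' : (10 <= n)%nat).
    { rewrite leq_eqVlt in Hn. move/orP: Hn => [Hn|Hn]; [|exact Hn].
      move/eqP: Hn => Hn. subst n. discriminate E. }
    specialize (H10 H10'). set (c := cos (2*PI/INR n)) in *.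
    split; [split|].
    + assert (16 / (1 + c) > 8).
      { apply Rmult_lt_reg_r with (1+c); [lra|]. unfold Rdiv. rewrite Rmult_assoc Rinv_l; lra. }
      lra.
    + assert (16 / (1 + c) <= 9).
      { apply div_le_k; lra. }
      lra.
    + intros _. field. split; lra.
Qed.

Lemma sq_le (X Y : R) : 0 <= Y -> X^2 <= Y^2 -> X <= Y.
Proof. intros. nra. Qed.

Lemma acos_antimono (x y : R) : -1 <= x -> x <= y -> y <= 1 -> acos y <= acos x.
Proof.
  intros H1 H2 H3. destruct (Rle_or_lt (acos y) (acos x)) as [H|H]; auto.
  pose proof (acos_bound x). pose proof (acos_bound y).
  pose proof (cos_decreasing_1 (acos x) (acos y)) as Hc.
  assert (Hcx : cos (acos x) = x) by (apply cos_acos; lra).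
  assert (Hcy : cos (acos y) = y) by (apply cos_acos; lra).
  rewrite Hcx Hcy in Hc.
  assert (y < x) by (apply Hc; lra). lra.
Qed.

Lemma clamp_bounds (x : R) : -1 <= Rmax (-1) (Rmin x 1) <= 1.
Proof. unfold Rmax, Rmin. repeat destruct Rle_dec; lra. Qed.

Lemma acos_clamp_ge (x c : R) : -1 <= c <= 1 -> x <= c -> acos c <= acos (Rmax (-1) (Rmin x 1)).
Proof.
  intros Hc Hx. apply acos_antimono; try lra.
  - apply clamp_bounds.
  - unfold Rmax, Rmin. repeat destruct Rle_dec; lra.
Qed.

Lemma acos_clamp_le (x c : R) : -1 <= c <= 1 -> c <= x -> acos (Rmax (-1) (Rmin x 1)) <= acos c.
Proof.
  intros Hc Hx. apply acos_antimono; try lra.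
  - unfold Rmax, Rmin. repeat destruct Rle_dec; lra.
  - apply clamp_bounds.
Qed.

Lemma phi_up (a p q r s f : R) : 1<=a<=2 -> 1<=p<=2 -> 1<=q<=2 -> 1<=r<=2 -> 1<=s<=2 -> 1<=f<=2 ->
  phi_formula a p q r s f <= (9-a)/(a+7).
Proof.
  intros Ha Hp Hq Hr Hs Hf. pose proof (up_poly a p q r s Ha Hp Hq Hr Hs) as HP.
  unfold phi_formula.
  set (P := 2 * a * p * r + a ^ 2 + p ^ 2 + r ^ 2 - 1) in *.
  set (Q := 2 * a * q * s + a ^ 2 + q ^ 2 + s ^ 2 - 1) in *.
  assert (HP4 : 4 <= P).
  { unfold P. assert (1 <= a*p) by nra. assert (1 <= a*p*r) by nra. nra. }
  assert (HQ4 : 4 <= Q).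
  { unfold Q. assert (1 <= a*q) by nra. assert (1 <= a*q*s) by nra. nra. }
  rewrite <- sqrt_mult by lra.
  set (S := sqrt (P * Q)).
  assert (HS2 : S^2 = P * Q) by (unfold S; rewrite pow2_sqrt; nra).
  assert (HS : 0 < S) by (unfold S; apply sqrt_lt_R0; nra).
  set (N1 := p*q + r*s + a*(p*s+q*r) + 1 - a^2) in *.
  assert (HN : p * q + r * s + a * p * s + a * q * r - a ^ 2 * f + f <= N1).
  { unfold N1. assert (0 <= (a^2-1)*(f-1)) by (apply Rmult_le_pos; nra). nra. }
  assert (HN1 : (a+7) * N1 <= (9-a) * S).
  { apply sq_le; [nra|]. rewrite Rpow_mult_distr. rewrite (Rpow_mult_distr (9-a)). rewrite HS2. nra. }
  apply div_le_k; [exact HS|].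
  apply Rmult_le_reg_l with (a+7); [lra|].
  replace ((a + 7) * ((9 - a) / (a + 7) * S)) with ((9-a)*S) by (field; lra).
  nra.
Qed.

Lemma phi_low (a p q r s f : R) : 1<=a<=2 -> 1<=p<=2 -> 1<=q<=2 -> 1<=r<=2 -> 1<=s<=2 -> 1<=f<=2 ->
  2*(2-a)/(1+a) <= phi_formula a p q r s f.
Proof.
  intros Ha Hp Hq Hr Hs Hf. pose proof (low_poly a p q r s Ha Hp Hq Hr Hs) as HP.
  unfold phi_formula.
  set (P := 2 * a * p * r + a ^ 2 + p ^ 2 + r ^ 2 - 1) in *.
  set (Q := 2 * a * q * s + a ^ 2 + q ^ 2 + s ^ 2 - 1) in *.
  assert (HP4 : 4 <= P).
  { unfold P. assert (1 <= a*p) by nra. assert (1 <= a*p*r) by nra. nra. }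
  assert (HQ4 : 4 <= Q).
  { unfold Q. assert (1 <= a*q) by nra. assert (1 <= a*q*s) by nra. nra. }
  rewrite <- sqrt_mult by lra.
  set (S := sqrt (P * Q)).
  assert (HS2 : S^2 = P * Q) by (unfold S; rewrite pow2_sqrt; nra).
  assert (HS : 0 < S) by (unfold S; apply sqrt_lt_R0; nra).
  set (N2 := p*q + r*s + a*(p*s+q*r) + 2*(1 - a^2)) in *.
  assert (HN : N2 <= p * q + r * s + a * p * s + a * q * r - a ^ 2 * f + f).
  { unfold N2. assert (0 <= (a^2-1)*(2-f)) by (apply Rmult_le_pos; nra). nra. }
  assert (HN2 : 0 <= N2).
  { unfold N2. assert (1 <= p*q) by nra. assert (1 <= r*s) by nra.
    assert (1 <= p*s) by nra. assert (1 <= q*r) by nra. nra. }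
  assert (HN1 : 2*(2-a) * S <= (a+1) * N2).
  { apply sq_le; [nra|]. rewrite Rpow_mult_distr. rewrite (Rpow_mult_distr (a+1)). rewrite HS2. nra. }
  apply Rmult_le_reg_r with S; [exact HS|].
  replace ((p * q + r * s + a * p * s + a * q * r - a ^ 2 * f + f) / S * S)
    with (p * q + r * s + a * p * s + a * q * r - a ^ 2 * f + f) by (field; lra).
  apply Rmult_le_reg_l with (1+a); [lra|].
  replace ((1 + a) * (2 * (2 - a) / (1 + a) * S)) with (2*(2-a)*S) by (field; lra).
  nra.
Qed.

Lemma set2_enum (s : {set 'I_4}) : #|s| = 2%nat ->
  [set nth ord0 (enum s) 0; nth ord0 (enum s) 1] = s.
Proof.
  move=> Hs. rewrite cardE in Hs.
  apply/setP => z. rewrite !inE -mem_enum.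
  case E: (enum s) Hs => [|x [|y [|w rest]]] //= _.
  by rewrite !inE.
Qed.

Lemma elen_main (M : pseudo3) (l : edgE M -> R) (he : hedge (tet M)) :
  elen l (val he).1 (nth ord0 (enum (val he).2) 0) (nth ord0 (enum (val he).2) 1) = l (PE he).
Proof.
  rewrite /elen set2_enum; last by apply/eqP; exact: (valP he).
  have -> : ((val he).1, (val he).2) = val he by case: (val he).
  by rewrite valK.
Qed.

Lemma elen_range (M : pseudo3) (l : edgE M -> R) :
  (forall e, 0 <= l e <= arccosh 2) ->
  forall t a b, 1 <= cosh (elen l t a b) <= 2.
Proof.
  move=> Hl t a b. rewrite /elen.
  case: insub => [y|].
  - split; [apply cosh_ge1|]. apply le_arccosh_cosh; [lra| apply Hl | apply Hl].
  - rewrite cosh_0'. lra.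
Qed.

Lemma dihedral_up (M : pseudo3) (l : edgE M -> R) (he : hedge (tet M)) (c : R) :
  (forall e, 0 <= l e <= arccosh 2) -> -1 <= c <= 1 ->
  (9 - cosh (l (PE he))) / (cosh (l (PE he)) + 7) <= c ->
  acos c <= dihedral l he.
Proof.
  move=> Hl Hc Hk. rewrite /dihedral /=. rewrite elen_main.
  apply acos_clamp_ge; first exact Hc.
  eapply Rle_trans; last exact Hk.
  have HR := @elen_range M l Hl.
  have Ha : 1 <= cosh (l (PE he)) <= 2.
  { rewrite -(@elen_main M l he). apply HR. }
  apply phi_up; try apply HR; exact Ha.
Qed.

Lemma dihedral_low (M : pseudo3) (l : edgE M -> R) (he : hedge (tet M)) (c : R) :
  (forall e, 0 <= l e <= arccosh 2) -> -1 <= c <= 1 ->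
  c <= 2 * (2 - cosh (l (PE he))) / (1 + cosh (l (PE he))) ->
  dihedral l he <= acos c.
Proof.
  move=> Hl Hc Hk. rewrite /dihedral /=. rewrite elen_main.
  apply acos_clamp_le; first exact Hc.
  eapply Rle_trans; first exact Hk.
  have HR := @elen_range M l Hl.
  have Ha : 1 <= cosh (l (PE he)) <= 2.
  { rewrite -(@elen_main M l he). apply HR. }
  apply phi_low; try apply HR; exact Ha.
Qed.

Lemma iter_Rplus (n : nat) (g : R) : iter n (Rplus g) 0 = INR n * g.
Proof.
  elim: n => [|n IH]; first by rewrite /=; lra.
  rewrite S_INR iterS IH. lra.
Qed.

Lemma sum_const_vdeg (M : pseudo3) (e : edgE M) (g : R) :
  \big[Rplus/0]_(x : hedge (tet M) | PE x == e) g = INR (vdeg e) * g.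
Proof.
  rewrite (eq_bigl (fun x => x \in [set x | PE x == e])); last by move=> x; rewrite inE.
  by rewrite big_const iter_Rplus.
Qed.

Lemma sum_le (M : pseudo3) (e : edgE M) (F G : hedge (tet M) -> R) :
  (forall x, PE x == e -> F x <= G x) ->
  \big[Rplus/0]_(x : hedge (tet M) | PE x == e) F x <=
  \big[Rplus/0]_(x : hedge (tet M) | PE x == e) G x.
Proof.
  move=> H. apply: (big_ind2 (fun a b => a <= b)).
  - lra.
  - move=> a b c d H1 H2. lra.
  - exact H.
Qed.

Lemma K_nonpos (M : pseudo3) (l : edgE M -> R) (e : edgE M) :
  (0 < INR (vdeg e)) ->
  (forall x, PE x == e -> 2 * PI / INR (vdeg e) <= dihedral l x) ->
  Ktilde l e <= 0.
Proof.
  move=> Hn H. rewrite /Ktilde.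
  have := @sum_le M e (fun _ => 2 * PI / INR (vdeg e)) (dihedral l) H.
  rewrite sum_const_vdeg.
  have -> : INR (vdeg e) * (2 * PI / INR (vdeg e)) = 2 * PI by field; lra.
  lra.
Qed.

Lemma K_nonneg (M : pseudo3) (l : edgE M -> R) (e : edgE M) :
  (0 < INR (vdeg e)) ->
  (forall x, PE x == e -> dihedral l x <= 2 * PI / INR (vdeg e)) ->
  0 <= Ktilde l e.
Proof.
  move=> Hn H. rewrite /Ktilde.
  have := @sum_le M e (dihedral l) (fun _ => 2 * PI / INR (vdeg e)) H.
  rewrite sum_const_vdeg.
  have -> : INR (vdeg e) * (2 * PI / INR (vdeg e)) = 2 * PI by field; lra.
  lra.
Qed.

Lemma K_up (M : pseudo3) (l : edgE M -> R) (e : edgE M) :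
  (10 <= vdeg e)%nat -> (forall e', 0 <= l e' <= arccosh 2) ->
  arccosh (b_const (vdeg e)) < l e -> Ktilde l e <= 0.
Proof.
  move=> H10 Hl Hlt.
  have H9 : (9 <= vdeg e)%nat by apply: leq_trans H10.
  have [[Hc1 Hc2] [Hacos [_ Hx0]]] := cn_facts (vdeg e) H9.
  have [[Hb1 Hb2] Hbc] := b_facts (vdeg e) H9.
  have Hbc' := Hbc H10.
  have Hn : 0 < INR (vdeg e).
  { apply lt_0_INR. apply/ltP. by apply: leq_trans H9. }
  apply K_nonpos => //.
  move=> x /eqP Hx. rewrite -Hacos.
  apply dihedral_up => //; first lra.
  rewrite Hx -Hbc'.
  have Ha := gt_arccosh_cosh (l e) (b_const (vdeg e)) ltac:(lra) Hlt.
  set a := cosh (l e) in Ha *. set b := b_const (vdeg e) in Ha Hb1 Hb2 *.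
  apply Rmult_le_reg_r with ((a+7)*(b+7)); first nra.
  have -> : (9 - a) / (a + 7) * ((a + 7) * (b + 7)) = (9-a)*(b+7) by field; lra.
  have -> : (9 - b) / (b + 7) * ((a + 7) * (b + 7)) = (9-b)*(a+7) by field; lra.
  nra.
Qed.

Lemma K_low (M : pseudo3) (l : edgE M -> R) (e : edgE M) :
  (9 <= vdeg e)%nat -> (forall e', 0 <= l e' <= arccosh 2) ->
  l e < arccosh (1 + mu_const (vdeg e)) -> 0 <= Ktilde l e.
Proof.
  move=> H9 Hl Hlt.
  have [[Hc1 Hc2] [Hacos [_ Hx0]]] := cn_facts (vdeg e) H9.
  have [Hmu1 Hmu2] := mu_facts (vdeg e) H9.
  have Hn : 0 < INR (vdeg e).
  { apply lt_0_INR. apply/ltP. by apply: leq_trans H9. }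
  apply K_nonneg => //.
  move=> x /eqP Hx. rewrite -Hacos.
  apply dihedral_low => //; first lra.
  rewrite Hx.
  have Ha := lt_arccosh_cosh (l e) (1 + mu_const (vdeg e)) ltac:(lra) (proj1 (Hl e)) Hlt.
  have Ha1 := cosh_ge1 (l e).
  set a := cosh (l e) in Ha Ha1 *. set c := cos (2 * PI / INR (vdeg e)) in Hc1 Hc2 Hmu2 *.
  have Hac : a <= (4 - c) / (2 + c) by lra.
  have Hac' : a * (2 + c) <= 4 - c.
  { have -> : 4 - c = (4 - c) / (2 + c) * (2 + c) by field; lra.
    apply Rmult_le_compat_r; lra. }
  apply Rmult_le_reg_r with (1 + a); first lra.
  have -> : 2 * (2 - a) / (1 + a) * (1 + a) = 2 * (2 - a) by field; lra.
  nra.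
Qed.

Lemma ballR (x e y : R) : ball x e y <-> Rabs (y - x) < e.
Proof. rewrite /ball /= /AbsRing_ball /abs /minus /plus /opp /=. tauto. Qed.

Lemma loc_eps (f : R -> R) (x : R) : filterlim f (locally x) (locally (f x)) ->
  forall eps, 0 < eps -> exists d, 0 < d /\ forall y, Rabs (y - x) < d -> Rabs (f y - f x) < eps.
Proof.
  move/filterlim_locally => H eps Heps.
  case: (H (mkposreal eps Heps)) => d Hd.
  exists d; split; first exact: cond_pos d.
  move=> y Hy. apply/ballR. apply Hd. by apply/ballR.
Qed.

Lemma right_eps (f : R -> R) : filterlim f (at_right 0) (locally (f 0)) ->
  forall eps, 0 < eps -> exists d, 0 < d /\ forall y, 0 < y < d -> Rabs (f y - f 0) < eps.
Proof.
  move/filterlim_locally => H eps Heps.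
  case: (H (mkposreal eps Heps)) => d Hd.
  exists d; split; first exact: cond_pos d.
  move=> y [Hy1 Hy2]. apply/ballR. apply Hd => //. apply/ballR.
  rewrite Rminus_0_r Rabs_pos_eq; simpl; lra.
Qed.

Lemma deriv_cont (f : R -> R) (x l : R) : is_derive f x l -> filterlim f (locally x) (locally (f x)).
Proof.
  move=> H. apply: ex_derive_continuous. by exists l.
Qed.

Arguments deriv_cont {f x l}.
Arguments loc_eps {f x}.
Arguments right_eps {f}.

Lemma barrier (f df : R -> R) (U t0 : R) :
  f 0 < U ->
  (forall t, 0 < t -> is_derive f t (df t)) ->
  filterlim f (at_right 0) (locally (f 0)) ->
  (forall t, 0 < t <= t0 -> U < f t -> df t <= 0) ->
  forall t, 0 <= t <= t0 -> f t <= U.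
Proof.
  move=> H0 Hd Hr Hneg t1 Ht1.
  destruct (Rle_or_lt (f t1) U) as [Hle|Hgt]; first exact Hle.
  exfalso.
  have Ht1p : 0 < t1.
  { destruct (Rle_or_lt t1 0) as [H|H]; last exact H.
    have E : t1 = 0 by lra. rewrite E in Hgt. lra. }
  set (S := fun t => 0 <= t <= t1 /\ f t <= U).
  have HSb : bound S by exists t1 => t [[_ Ht] _].
  have HSne : exists x, S x by exists 0; split; [lra|lra].
  case: (completeness S HSb HSne) => s [Hub Hlub].
  have Hs0 : 0 <= s by apply Hub; split; [lra|lra].
  have Hst1 : s <= t1 by apply Hlub => t [[_ Ht] _].
  have Hfs : f s <= U.
  { destruct (Rle_or_lt (f s) U) as [H|H]; first exact H.
    exfalso.
    destruct Hs0 as [Hs0|Hs0]; last by (rewrite -Hs0 in H; lra).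
    have [d [Hd0 Hdd]] := loc_eps (deriv_cont (Hd s Hs0)) (f s - U) ltac:(lra).
    have Hnot : ~ is_upper_bound S (s - d / 2).
    { move=> Hb. have := Hlub _ Hb. lra. }
    apply Hnot => x Hx.
    destruct (Rle_or_lt x (s - d/2)) as [Hx'|Hx']; first exact Hx'.
    exfalso. have Hxs : x <= s by apply Hub.
    have := Hdd x ltac:(rewrite Rabs_left1; lra).
    case: Hx => _ Hfx. move=> Habs.
    have := Rle_abs (f s - f x). rewrite -Rabs_Ropp. 
    have -> : - (f s - f x) = f x - f s by ring. lra. }
  have Hslt : s < t1.
  { destruct (Rle_or_lt t1 s) as [H|H]; last exact H.
    have E : s = t1 by lra. rewrite E in Hfs. lra. }
  have Habove : forall t, s < t <= t1 -> U < f t.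
  { move=> t Ht. destruct (Rle_or_lt (f t) U) as [H|H]; last exact H.
    exfalso. have : t <= s by apply Hub; split; [lra|exact H]. lra. }
  have Hmono : forall s', s < s' < t1 -> f t1 <= f s'.
  { move=> s' Hs'.
    have [c [Hc Hmvt]] := MVT_gen f s' t1 df
      ltac:(move=> x; rewrite Rmin_left ?Rmax_right; try lra; move=> Hx; apply Hd; lra)
      ltac:(move=> x; rewrite Rmin_left ?Rmax_right; try lra; move=> Hx;
            apply/continuity_pt_filterlim; apply: (deriv_cont (Hd x _)); lra).
    rewrite Rmin_left ?Rmax_right in Hc; try lra.
    have Hdc : df c <= 0 by apply Hneg; [lra| apply Habove; lra].
    have : df c * (t1 - s') <= 0 by apply Rmult_le_0_r; lra.
    lra. }
  have Hrc : exists d, 0 < d /\ forall y, s < y < s + d -> Rabs (f y - f s) < f t1 - f s.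
  { destruct Hs0 as [Hs0|Hs0].
    - have [d [Hd0 Hdd]] := loc_eps (deriv_cont (Hd s Hs0)) (f t1 - f s) ltac:(lra).
      exists d; split => // y Hy. apply Hdd. rewrite Rabs_pos_eq; lra.
    - rewrite -Hs0 in Hfs *.
      have [d [Hd0 Hdd]] := right_eps Hr (f t1 - f 0) ltac:(lra).
      exists d; split => // y Hy. apply Hdd. lra. }
  case: Hrc => d [Hd0 Hdd].
  set s' := s + Rmin (d/2) ((t1 - s)/2).
  have Hm1 : Rmin (d/2) ((t1 - s)/2) <= d/2 by apply Rmin_l.
  have Hm2 : Rmin (d/2) ((t1 - s)/2) <= (t1 - s)/2 by apply Rmin_r.
  have Hm3 : 0 < Rmin (d/2) ((t1 - s)/2) by apply Rmin_glb_lt; lra.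
  have H1 := Hmono s' ltac:(rewrite /s'; lra).
  have H2 := Hdd s' ltac:(rewrite /s'; lra).
  have := Rle_abs (f s' - f s). lra.
Qed.

Lemma barrier_low (f df : R -> R) (L t0 : R) :
  L < f 0 ->
  (forall t, 0 < t -> is_derive f t (df t)) ->
  filterlim f (at_right 0) (locally (f 0)) ->
  (forall t, 0 < t <= t0 -> f t < L -> 0 <= df t) ->
  forall t, 0 <= t <= t0 -> L <= f t.
Proof.
  move=> H0 Hd Hr Hpos t Ht.
  have H := barrier (fun s => - f s) (fun s => - df s) (-L) t0.
  have : - f t <= - L.
  { apply H => //.
    - lra.
    - move=> s Hs. have := is_derive_opp f s (df s) (Hd s Hs). by [].
    - have := filterlim_comp R R R f Ropp (at_right 0) (locally (f 0)) (locally (- f 0)) Hr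
        (@filterlim_opp R_AbsRing R_NormedModule (f 0)).
      by [].
    - move=> s Hs Hlt. have := Hpos s Hs ltac:(lra). lra. }
  lra.
Qed.

Theorem theorem4p7 (M : pseudo3) (l0 : edgE M -> R) (l : R -> edgE M -> R) :
  (forall e : edgE M, (9 <= vdeg e)%nat) ->
  (forall e : edgE M, 0 < l0 e < arccosh 2) ->
  (forall e : edgE M, arccosh (1 + mu_const (vdeg e)) < l0 e < arccosh (b_const (vdeg e))) ->
  ext_ricci_flow l0 l ->
  forall t0, 0 < t0 ->
  (forall t (e : edgE M), 0 <= t <= t0 -> l t e <= arccosh 2) ->
  (forall t (e : edgE M), 0 <= t <= t0 ->
     arccosh (1 + mu_const (vdeg e)) <= l t e <= arccosh (b_const (vdeg e))) /\
  (forall e : edgE M, 0 < arccosh (1 + mu_const (vdeg e)) /\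
             arccosh (b_const (vdeg e)) <= arccosh 2).
Proof.
  move=> Hv Hl0 Hl0b [Hl00 [Hpos [Hcont Hder]]] t0 Ht0 Hsup.
  have Hrange : forall s, 0 <= s <= t0 -> forall e', 0 <= l s e' <= arccosh 2.
  { move=> s Hs e'. split; [left; apply Hpos; lra| apply Hsup; lra]. }
  have Hcont' : forall e, filterlim (fun s => l s e) (at_right 0) (locally (l 0 e)).
  { move=> e. rewrite Hl00. apply Hcont. }
  split.
  - move=> t e Ht. split.
    + have H0 : arccosh (1 + mu_const (vdeg e)) < l 0 e by rewrite Hl00; apply Hl0b.
      have H3 : forall s, 0 < s <= t0 -> l s e < arccosh (1 + mu_const (vdeg e)) ->
                 0 <= Ktilde (l s) e * l s e.
      { move=> s Hs Hlt. apply Rmult_le_pos.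
        - apply (@K_low M (l s) e (Hv e)); [apply Hrange; lra| exact Hlt].
        - left. apply Hpos. lra. }
      exact: (barrier_low (fun s => l s e) (fun s => Ktilde (l s) e * l s e)
               (arccosh (1 + mu_const (vdeg e))) t0 H0 (fun s Hs => Hder s e Hs) (Hcont' e) H3 t Ht).
    + case: (leqP 10 (vdeg e)) => H10.
      * have H0 : l 0 e < arccosh (b_const (vdeg e)) by rewrite Hl00; apply Hl0b.
        have H3 : forall s, 0 < s <= t0 -> arccosh (b_const (vdeg e)) < l s e ->
                 Ktilde (l s) e * l s e <= 0.
        { move=> s Hs Hlt. apply Rmult_le_0_r.
          - apply (@K_up M (l s) e H10); [apply Hrange; lra| exact Hlt].
          - left. apply Hpos. lra. }
        exact: (barrier (fun s => l s e) (fun s => Ktilde (l s) e * l s e)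
               (arccosh (b_const (vdeg e))) t0 H0 (fun s Hs => Hder s e Hs) (Hcont' e) H3 t Ht).
      * have E : vdeg e == 9%nat.
        { rewrite eqn_leq Hv andbT. by rewrite -ltnS. }
        rewrite /b_const E. apply Hsup. exact Ht.
  - move=> e. have [Hmu _] := mu_facts (vdeg e) (Hv e).
    have [[Hb1 Hb2] _] := b_facts (vdeg e) (Hv e).
    split.
    + have [_ [_ H]] := arccosh_spec (1 + mu_const (vdeg e)) ltac:(lra). apply H. lra.
    + apply arccosh_le. lra.
Qed.
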